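(* Let $\{a_i,\ell_i,\gamma_i\}$ be a configuration and $a\in\mathbb R^2$ a point. Then exactly one of the following holds: (i) $a$ is non-constructible from the configuration; (ii) for every choice of four points $c_1,c_2,c_3,c_4\in\mathbb R^2$ in general position, the general algorithm started from the configuration and $c_1,\dots,c_4$ constructs $a$, i.e., $a\in S_k$ for some $k$.
   Context: A configuration is a finite collection of points $a_i\in\mathbb R^2$, lines $\ell_i\subset\mathbb R^2$ and curves $\gamma_i\subset\mathbb R^2$. Given a configuration $\{a_i,\ell_i,\gamma_i\}$, call a set $\Sigma\subset\mathbb R^2$ admissible if: (1) $\Sigma$ is dense in $\mathbb R^2$; (2) every $a_i$ lies in $\Sigma$; (3) for any $b_1,b_2,b_3,b_4\in\Sigma$ with $b_1\neq b_2$, $b_3\ne b_4$, if the lines $b_1b_2$ and $b_3b_4$ are distinct and not parallel, then their intersection point lies in $\Sigma$; (4) for any distinct $b_1,b_2\in\Sigma$, every isolated intersection point of the line $b_1b_2$ with any of the lines $\ell_i$ or curves $\gamma_j$ lies in $\Sigma$. A point $a$ is non-constructible from the configuration if there exists an admissible set $\Sigma$ with $a\notin\Sigma$. Four points $c_1,\dots,c_4$ are in general position if no three of them are collinear and no two of the six lines $c_jc_k$ are parallel. The general algorithm: set $S_0=\{a_i\}\cup\{c_1,c_2,c_3,c_4\}$ and $L_0=\{\ell_i\}$; given $S_k,L_k$, let $L_{k+1}=L_k\cup\{\text{lines through two distinct points of } S_k\}$ and let $S_{k+1}$ be $S_k$ together with all intersection points of pairs of distinct non-parallel lines in $L_{k+1}$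 and all isolated intersection points of lines in $L_{k+1}$ with the curves $\gamma_j$. The algorithm constructs $a$ if $a\in S_k$ for some $k$. *)

(* Defs.v *)
From Stdlib Require Import Reals List.
Import ListNotations.
Open Scope R_scope.

Definition pt : Type := (R * R)%type.

Definition padd (p q : pt) : pt := (fst p + fst q, snd p + snd q).
Definition psub (p q : pt) : pt := (fst p - fst q, snd p - snd q).
Definition pscale (t : R) (p : pt) : pt := (t * fst p, t * snd p).
Definition cross (u v : pt) : R := fst u * snd v - snd u * fst v.
Definition dist2 (p q : pt) : R := (fst p - fst q)^2 + (snd p - snd q)^2.

(* A line is represented by a base point and a direction vector;
   it is a genuine line when the direction is nonzero. *)
Definition line : Type := (pt * pt)%type.
Definition is_line (l : line) : Prop := snd l <> (0, 0).
Definition on_line (l : line) (x : pt) : Prop :=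
  exists t : R, x = padd (fst l) (pscale t (snd l)).
Definition line_through (b1 b2 : pt) : line := (b1, psub b2 b1).
Definition parallel (l1 l2 : line) : Prop := cross (snd l1) (snd l2) = 0.

Definition isolated_inter (l : line) (G : pt -> Prop) (p : pt) : Prop :=
  on_line l p /\ G p /\
  exists eps : R, 0 < eps /\
    forall q : pt, on_line l q -> G q -> dist2 p q < eps ^ 2 -> q = p.

(* A configuration: finitely many points, lines and curves (curves are
   arbitrary subsets of R^2). *)
Record config : Type := Config {
  cpoints : list pt;
  clines  : list line;
  ccurves : list (pt -> Prop)
}.

Definition dense (S : pt -> Prop) : Prop :=
  forall (x : pt) (eps : R), 0 < eps -> exists y, S y /\ dist2 x y < eps ^ 2.

Definition admissible (C : config) (Sg : pt -> Prop) : Prop :=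
  dense Sg /\
  (forall a, In a (cpoints C) -> Sg a) /\
  (forall b1 b2 b3 b4 p, Sg b1 -> Sg b2 -> Sg b3 -> Sg b4 ->
     b1 <> b2 -> b3 <> b4 ->
     ~ parallel (line_through b1 b2) (line_through b3 b4) ->
     on_line (line_through b1 b2) p -> on_line (line_through b3 b4) p ->
     Sg p) /\
  (forall b1 b2 p, Sg b1 -> Sg b2 -> b1 <> b2 ->
     ((exists l, In l (clines C) /\ isolated_inter (line_through b1 b2) (on_line l) p)
      \/ (exists g, In g (ccurves C) /\ isolated_inter (line_through b1 b2) g p)) ->
     Sg p).

Definition non_constructible (C : config) (a : pt) : Prop :=
  exists Sg, admissible C Sg /\ ~ Sg a.

Definition collinear (a b c : pt) : Prop := cross (psub b a) (psub c a) = 0.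

Definition general_position (c1 c2 c3 c4 : pt) : Prop :=
  ~ collinear c1 c2 c3 /\ ~ collinear c1 c2 c4 /\
  ~ collinear c1 c3 c4 /\ ~ collinear c2 c3 c4 /\
  (* no two of the six lines c_j c_k parallel; pairs sharing a point are
     covered by non-collinearity, the remaining pairs are: *)
  ~ parallel (line_through c1 c2) (line_through c3 c4) /\
  ~ parallel (line_through c1 c3) (line_through c2 c4) /\
  ~ parallel (line_through c1 c4) (line_through c2 c3).

Fixpoint stage (C : config) (c1 c2 c3 c4 : pt) (k : nat)
  : ((pt -> Prop) * (line -> Prop))%type :=
  match k with
  | O => (fun x => In x (cpoints C) \/ x = c1 \/ x = c2 \/ x = c3 \/ x = c4,
          fun l => In l (clines C))
  | S k' =>
      let (Sk, Lk) := stage C c1 c2 c3 c4 k' in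
      let L' := fun l => Lk l \/
                 exists b1 b2, Sk b1 /\ Sk b2 /\ b1 <> b2 /\ l = line_through b1 b2 in
      (fun x => Sk x
         \/ (exists l1 l2, L' l1 /\ L' l2 /\ ~ parallel l1 l2 /\
               on_line l1 x /\ on_line l2 x)
         \/ (exists l g, L' l /\ In g (ccurves C) /\ isolated_inter l g x),
       L')
  end.

Definition algorithm_constructs (C : config) (c1 c2 c3 c4 a : pt) : Prop :=
  exists k : nat, fst (stage C c1 c2 c3 c4 k) a.

(* Main.v *)
From Coquelicot Require Import Coquelicot.
From Stdlib Require Import Reals Lra Psatz List Classical.
Require Import Defs.
Open Scope R_scope.

Set Bullet Behavior "None".
Definition U8 : Type := ((R*R)*(R*R))*((R*R)*(R*R)).
Lemma cmul (f g : U8 -> R) z : continuous f z -> continuous g z -> continuous (fun y => f y * g y) z.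
Proof. intros. apply (continuous_mult f g z); auto. Qed.
Lemma cplus (f g : U8 -> R) z : continuous f z -> continuous g z -> continuous (fun y => f y + g y) z.
Proof. intros. apply (continuous_plus f g z); auto. Qed.
Lemma cminus (f g : U8 -> R) z : continuous f z -> continuous g z -> continuous (fun y => f y - g y) z.
Proof. intros. apply (continuous_minus f g z); auto. Qed.
Lemma cinv (f : U8 -> R) z : continuous f z -> f z <> 0 -> continuous (fun y => / f y) z.
Proof. intros. apply (continuous_comp f Rinv z); auto. apply continuous_Rinv; auto. Qed.
Ltac cproj := destruct_all; repeat (first [apply continuous_fst | apply continuous_snd | apply continuous_comp]).
Lemma cp1 z : continuous (fun y : U8 => fst (fst (fst y))) z.
Proof. destruct z as [[[a b] c] d]. apply continuous_comp. apply continuous_comp. apply continuous_fst. apply continuous_fst. apply continuous_fst. Qed.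
Lemma cp2 z : continuous (fun y : U8 => snd (fst (fst y))) z.
Proof. destruct z as [[[a b] c] d]. apply continuous_comp. apply continuous_comp. apply continuous_fst. apply continuous_fst. apply continuous_snd. Qed.
Lemma cp3 z : continuous (fun y : U8 => fst (snd (fst y))) z.
Proof. destruct z as [[[a b] [c e]] d]. apply continuous_comp. apply continuous_comp. apply continuous_fst. apply continuous_snd. apply continuous_fst. Qed.
Lemma cp4 z : continuous (fun y : U8 => snd (snd (fst y))) z.
Proof. destruct z as [[[a b] [c e]] d]. apply continuous_comp. apply continuous_comp. apply continuous_fst. apply continuous_snd. apply continuous_snd. Qed.
Lemma cp5 z : continuous (fun y : U8 => fst (fst (snd y))) z.
Proof. destruct z as [a [[b c] d]]. apply continuous_comp. apply continuous_comp. apply continuous_snd. apply continuous_fst. apply continuous_fst. Qed.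
Lemma cp6 z : continuous (fun y : U8 => snd (fst (snd y))) z.
Proof. destruct z as [a [[b c] d]]. apply continuous_comp. apply continuous_comp. apply continuous_snd. apply continuous_fst. apply continuous_snd. Qed.
Lemma cp7 z : continuous (fun y : U8 => fst (snd (snd y))) z.
Proof. destruct z as [a [b [c d]]]. apply continuous_comp. apply continuous_comp. apply continuous_snd. apply continuous_snd. apply continuous_fst. Qed.
Lemma cp8 z : continuous (fun y : U8 => snd (snd (snd y))) z.
Proof. destruct z as [a [b [c d]]]. apply continuous_comp. apply continuous_comp. apply continuous_snd. apply continuous_snd. apply continuous_snd. Qed.

Definition Dn (b1 b2 b3 b4 : pt) : R := cross (psub b2 b1) (psub b4 b3).
Definition tpar (b1 b2 b3 b4 : pt) : R := cross (psub b3 b1) (psub b4 b3) / Dn b1 b2 b3 b4.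
Definition meetpt (b1 b2 b3 b4 : pt) : pt := padd b1 (pscale (tpar b1 b2 b3 b4) (psub b2 b1)).
Definition DnU (y : U8) := Dn (fst (fst y)) (snd (fst y)) (fst (snd y)) (snd (snd y)).
Definition M1U (y : U8) := fst (meetpt (fst (fst y)) (snd (fst y)) (fst (snd y)) (snd (snd y))).
Definition M2U (y : U8) := snd (meetpt (fst (fst y)) (snd (fst y)) (fst (snd y)) (snd (snd y))).
Lemma copp (f : U8 -> R) z : continuous f z -> continuous (fun y => - f y) z.
Proof. intros. apply (continuous_opp f z); auto. Qed.
Ltac cstep := lazymatch goal with
 | |- continuous (fun y => _ + _) _ => apply cplus
 | |- continuous (fun y => _ - _) _ => apply cminus
 | |- continuous (fun y => _ * _) _ => apply cmul
 | |- continuous (fun y => - _) _ => apply copp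
 | |- continuous (fun y => / _) _ => apply cinv
 | |- continuous (fun y => fst (fst (fst y))) _ => apply cp1
 | |- continuous (fun y => snd (fst (fst y))) _ => apply cp2
 | |- continuous (fun y => fst (snd (fst y))) _ => apply cp3
 | |- continuous (fun y => snd (snd (fst y))) _ => apply cp4
 | |- continuous (fun y => fst (fst (snd y))) _ => apply cp5
 | |- continuous (fun y => snd (fst (snd y))) _ => apply cp6
 | |- continuous (fun y => fst (snd (snd y))) _ => apply cp7
 | |- continuous (fun y => snd (snd (snd y))) _ => apply cp8
 end.
Ltac cont2 := repeat cstep.
Lemma cDn z : continuous DnU z.
Proof. unfold DnU, Dn, cross, psub; simpl. cont2. Qed.
Lemma cM1 z : DnU z <> 0 -> continuous M1U z.
Proof. intro H. unfold M1U, meetpt, tpar, Dn, cross, padd, pscale, psub; simpl. unfold Rdiv.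
cont2. exact H. Qed.
Lemma cM2 z : DnU z <> 0 -> continuous M2U z.
Proof. intro H. unfold M2U, meetpt, tpar, Dn, cross, padd, pscale, psub; simpl. unfold Rdiv.
cont2. exact H. Qed.

Lemma ball8 (z y : U8) (d : posreal) :
  Rabs (fst (fst (fst y)) - fst (fst (fst z))) < d ->
  Rabs (snd (fst (fst y)) - snd (fst (fst z))) < d ->
  Rabs (fst (snd (fst y)) - fst (snd (fst z))) < d ->
  Rabs (snd (snd (fst y)) - snd (snd (fst z))) < d ->
  Rabs (fst (fst (snd y)) - fst (fst (snd z))) < d ->
  Rabs (snd (fst (snd y)) - snd (fst (snd z))) < d ->
  Rabs (fst (snd (snd y)) - fst (snd (snd z))) < d ->
  Rabs (snd (snd (snd y)) - snd (snd (snd z))) < d ->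
  ball z d y.
Proof.
destruct z as [[[z1 z2] [z3 z4]] [[z5 z6] [z7 z8]]].
destruct y as [[[y1 y2] [y3 y4]] [[y5 y6] [y7 y8]]]. simpl.
intros. repeat split; assumption.
Qed.

Definition close (d : R) (p q : pt) : Prop := Rabs (fst q - fst p) < d /\ Rabs (snd q - snd p) < d.

Lemma ext8 (f : U8 -> R) b1 b2 b3 b4 : continuous f ((b1,b2),(b3,b4)) -> forall e, 0 < e -> exists d, 0 < d /\
  forall b1' b2' b3' b4', close d b1 b1' -> close d b2 b2' -> close d b3 b3' -> close d b4 b4' ->
  Rabs (f ((b1',b2'),(b3',b4')) - f ((b1,b2),(b3,b4))) < e.
Proof.
intros H e He.
destruct (proj1 (filterlim_locally f (f ((b1,b2),(b3,b4)))) H (mkposreal e He)) as [d Hd].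
exists d. split. apply cond_pos. intros b1' b2' b3' b4' [H1 H2] [H3 H4] [H5 H6] [H7 H8].
apply (Hd ((b1',b2'),(b3',b4'))). apply ball8; simpl; auto.
Qed.

Lemma close_mono d d' p q : d <= d' -> close d p q -> close d' p q.
Proof. unfold close; intros; lra. Qed.

Lemma cont_meet b1 b2 b3 b4 : Dn b1 b2 b3 b4 <> 0 -> forall e, 0 < e -> exists d, 0 < d /\
  forall b1' b2' b3' b4', close d b1 b1' -> close d b2 b2' -> close d b3 b3' -> close d b4 b4' ->
  Dn b1' b2' b3' b4' <> 0 /\
  Rabs (fst (meetpt b1' b2' b3' b4') - fst (meetpt b1 b2 b3 b4)) < e /\
  Rabs (snd (meetpt b1' b2' b3' b4') - snd (meetpt b1 b2 b3 b4)) < e.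
Proof.
intros HD e He.
assert (HD' : DnU ((b1,b2),(b3,b4)) <> 0) by exact HD.
destruct (ext8 DnU b1 b2 b3 b4 (cDn _) (Rabs (Dn b1 b2 b3 b4)) (Rabs_pos_lt _ HD)) as [d1 [Hd1 H1]].
destruct (ext8 M1U b1 b2 b3 b4 (cM1 _ HD') e He) as [d2 [Hd2 H2]].
destruct (ext8 M2U b1 b2 b3 b4 (cM2 _ HD') e He) as [d3 [Hd3 H3]].
exists (Rmin d1 (Rmin d2 d3)). split.
{ apply Rmin_pos; auto. apply Rmin_pos; auto. }
intros b1' b2' b3' b4' C1 C2 C3 C4.
assert (m1 : Rmin d1 (Rmin d2 d3) <= d1) by apply Rmin_l.
assert (m2 : Rmin d1 (Rmin d2 d3) <= d2) by (eapply Rle_trans; [apply Rmin_r | apply Rmin_l]).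
assert (m3 : Rmin d1 (Rmin d2 d3) <= d3) by (eapply Rle_trans; [apply Rmin_r | apply Rmin_r]).
split; [| split].
- pose proof (H1 b1' b2' b3' b4' (close_mono _ _ _ _ m1 C1) (close_mono _ _ _ _ m1 C2)
     (close_mono _ _ _ _ m1 C3) (close_mono _ _ _ _ m1 C4)) as K.
  unfold DnU in K; simpl in K. intro E. rewrite E in K.
  rewrite Rminus_0_l, Rabs_Ropp in K. lra.
- exact (H2 b1' b2' b3' b4' (close_mono _ _ _ _ m2 C1) (close_mono _ _ _ _ m2 C2)
     (close_mono _ _ _ _ m2 C3) (close_mono _ _ _ _ m2 C4)).
- exact (H3 b1' b2' b3' b4' (close_mono _ _ _ _ m3 C1) (close_mono _ _ _ _ m3 C2)
     (close_mono _ _ _ _ m3 C3) (close_mono _ _ _ _ m3 C4)).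
Qed.

Set Bullet Behavior "None".

Definition MC (P : pt -> Prop) : Prop := forall b1 b2 b3 b4 p, P b1 -> P b2 -> P b3 -> P b4 ->
  b1 <> b2 -> b3 <> b4 -> ~ parallel (line_through b1 b2) (line_through b3 b4) ->
  on_line (line_through b1 b2) p -> on_line (line_through b3 b4) p -> P p.

Lemma MCc (P : pt -> Prop) x1 y1 x2 y2 x3 y3 x4 y4 X Y t s : MC P ->
  P (x1,y1) -> P (x2,y2) -> P (x3,y3) -> P (x4,y4) ->
  (x2 - x1) * (y4 - y3) - (y2 - y1) * (x4 - x3) <> 0 ->
  X = x1 + t * (x2 - x1) -> Y = y1 + t * (y2 - y1) ->
  X = x3 + s * (x4 - x3) -> Y = y3 + s * (y4 - y3) -> P (X, Y).
Proof.
intros HM H1 H2 H3 H4 HD E1 E2 E3 E4.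
refine (HM (x1,y1) (x2,y2) (x3,y3) (x4,y4) _ H1 H2 H3 H4 _ _ _ _ _).
- intro E. injection E; intros; subst. apply HD. ring.
- intro E. injection E; intros; subst. apply HD. ring.
- unfold parallel, line_through, cross, psub; simpl. exact HD.
- exists t. unfold line_through, padd, pscale, psub; simpl. rewrite E1, E2. reflexivity.
- exists s. unfold line_through, padd, pscale, psub; simpl. rewrite E3, E4. reflexivity.
Qed.

Lemma on_both_meet b1 b2 b3 b4 p : Dn b1 b2 b3 b4 <> 0 ->
  on_line (line_through b1 b2) p -> on_line (line_through b3 b4) p -> p = meetpt b1 b2 b3 b4.
Proof.
destruct b1 as [a1 a2], b2 as [c1 c2], b3 as [e1 e2], b4 as [f1 f2], p as [p1 p2].
unfold meetpt, tpar, Dn, on_line, line_through, cross, padd, pscale, psub; simpl.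
intros HD [t Ht] [s Hs]. injection Ht; injection Hs; intros G1 G2 G3 G4.
assert (Ht2 : t * ((c1 - a1) * (f2 - e2) - (c2 - a2) * (f1 - e1)) =
   (e1 - a1) * (f2 - e2) - (e2 - a2) * (f1 - e1)).
{ assert (K1 : a1 + t*(c1-a1) = e1 + s*(f1-e1)) by lra.
  assert (K2 : a2 + t*(c2-a2) = e2 + s*(f2-e2)) by lra.
  assert (K : (f2 - e2) * ((a1 + t*(c1-a1)) - (e1 + s*(f1-e1))) - (f1 - e1)*((a2 + t*(c2-a2)) - (e2 + s*(f2-e2))) = 0)
    by (rewrite K1, K2; ring).
  transitivity (((e1 - a1) * (f2 - e2) - (e2 - a2) * (f1 - e1)) + ((f2 - e2) * ((a1 + t*(c1-a1)) - (e1 + s*(f1-e1))) - (f1 - e1)*((a2 + t*(c2-a2)) - (e2 + s*(f2-e2))))).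
  ring. rewrite K. ring. }
assert (Ht3 : t = ((e1 - a1) * (f2 - e2) - (e2 - a2) * (f1 - e1)) / ((c1 - a1) * (f2 - e2) - (c2 - a2) * (f1 - e1))).
{ rewrite <- Ht2. field. auto. }
rewrite G3, G4, Ht3. reflexivity.
Qed.

Lemma meet_on1 b1 b2 b3 b4 : on_line (line_through b1 b2) (meetpt b1 b2 b3 b4).
Proof. exists (tpar b1 b2 b3 b4). reflexivity. Qed.

Lemma meet_on2 b1 b2 b3 b4 : Dn b1 b2 b3 b4 <> 0 -> on_line (line_through b3 b4) (meetpt b1 b2 b3 b4).
Proof.
destruct b1 as [a1 a2], b2 as [c1 c2], b3 as [e1 e2], b4 as [f1 f2].
unfold meetpt, tpar, Dn, on_line, line_through, cross, padd, pscale, psub; simpl. intro HD.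
exists (((e1 - a1) * (c2 - a2) - (e2 - a2) * (c1 - a1)) / ((c1 - a1) * (f2 - e2) - (c2 - a2) * (f1 - e1))).
f_equal; field; auto.
Qed.

Lemma Dn_neq12 b1 b2 b3 b4 : Dn b1 b2 b3 b4 <> 0 -> b1 <> b2.
Proof. destruct b1, b2, b3, b4. intros H E; injection E; intros; subst. apply H. unfold Dn, cross, psub; simpl; ring. Qed.
Lemma Dn_neq34 b1 b2 b3 b4 : Dn b1 b2 b3 b4 <> 0 -> b3 <> b4.
Proof. destruct b1, b2, b3, b4. intros H E; injection E; intros; subst. apply H. unfold Dn, cross, psub; simpl; ring. Qed.

Lemma MC_meet P b1 b2 b3 b4 : MC P -> P b1 -> P b2 -> P b3 -> P b4 -> Dn b1 b2 b3 b4 <> 0 ->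
  P (meetpt b1 b2 b3 b4).
Proof.
intros HM H1 H2 H3 H4 HD. apply (HM b1 b2 b3 b4); auto.
- eapply Dn_neq12; eauto.
- eapply Dn_neq34; eauto.
- apply meet_on1.
- apply meet_on2; auto.
Qed.

Definition Approx (P : pt -> Prop) (z : pt) : Prop :=
  forall e, 0 < e -> exists y, P y /\ dist2 z y < e ^ 2.
Definition Closed (P : pt -> Prop) : Prop :=
  forall z, (forall e, 0 < e -> exists y, P y /\ dist2 z y < e ^ 2) -> P z.

Lemma dist2_tri x y z : dist2 x z <= 2 * (dist2 x y + dist2 y z).
Proof. destruct x as [x1 x2], y as [y1 y2], z as [z1 z2]; unfold dist2; simpl.
pose proof (pow2_ge_0 (x1 - 2*y1 + z1)). pose proof (pow2_ge_0 (x2 - 2*y2 + z2)). nra. Qed.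
Lemma dist2_sym x y : dist2 x y = dist2 y x.
Proof. destruct x, y; unfold dist2; simpl; ring. Qed.
Lemma dist2_refl x : dist2 x x = 0.
Proof. destruct x; unfold dist2; simpl; ring. Qed.

Lemma Approx_of P z : P z -> Approx P z.
Proof. intros H e He. exists z. split; auto. rewrite dist2_refl. apply pow_lt; auto. Qed.

Lemma Approx_closed P : Closed (Approx P).
Proof.
intros z H e He.
destruct (H (e/2) ltac:(lra)) as [y [Hy Hzy]].
destruct (Hy (e/2) ltac:(lra)) as [w [Hw Hyw]].
exists w. split; auto. pose proof (dist2_tri z y w). nra.
Qed.

Lemma sq_abs u d : 0 < d -> u ^ 2 < d ^ 2 -> Rabs u < d.
Proof. intros. unfold Rabs; destruct (Rcase_abs u); nra. Qed.

Lemma dist2_close z y d : 0 < d -> dist2 z y < d ^ 2 -> close d z y.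
Proof.
destruct z as [z1 z2], y as [y1 y2]; unfold dist2, close; simpl; intros Hd H.
pose proof (pow2_ge_0 (z1 - y1)). pose proof (pow2_ge_0 (z2 - y2)).
split; apply sq_abs; auto.
replace ((y1 - z1)^2) with ((z1 - y1)^2) by ring. lra.
replace ((y2 - z2)^2) with ((z2 - y2)^2) by ring. lra.
Qed.

Lemma Approx_MC P : MC P -> MC (Approx P).
Proof.
intros HM b1 b2 b3 b4 p H1 H2 H3 H4 N12 N34 NP L1 L2.
assert (HD : Dn b1 b2 b3 b4 <> 0) by exact NP.
rewrite (on_both_meet _ _ _ _ _ HD L1 L2).
intros e He.
destruct (cont_meet b1 b2 b3 b4 HD (e/2) ltac:(lra)) as [d [Hd Hc]].
destruct (H1 d Hd) as [b1' [P1 D1]].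
destruct (H2 d Hd) as [b2' [P2 D2]].
destruct (H3 d Hd) as [b3' [P3 D3]].
destruct (H4 d Hd) as [b4' [P4 D4]].
destruct (Hc b1' b2' b3' b4' (dist2_close _ _ _ Hd D1) (dist2_close _ _ _ Hd D2)
  (dist2_close _ _ _ Hd D3) (dist2_close _ _ _ Hd D4)) as [HD' [E1 E2]].
exists (meetpt b1' b2' b3' b4'). split.
- apply MC_meet; auto.
- destruct (meetpt b1' b2' b3' b4') as [m1 m2], (meetpt b1 b2 b3 b4) as [n1 n2].
  unfold dist2; simpl in *.
  apply Rabs_def2 in E1. apply Rabs_def2 in E2. nra.
Qed.

Lemma dense_Approx P : (forall z, Approx P z) -> dense P.
Proof. intros H x e He. apply (H x e He). Qed.

Set Bullet Behavior "None".

Definition phi (W u v z : pt) : pt :=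
  (fst W + fst z * fst u + snd z * fst v, snd W + fst z * snd u + snd z * snd v).

Lemma MC_transport P W u v : MC P -> cross u v <> 0 -> MC (fun z => P (phi W u v z)).
Proof.
intros HM Huv b1 b2 b3 b4 p H1 H2 H3 H4 N12 N34 NP [t Ht] [s Hs].
destruct W as [w1 w2], u as [u1 u2], v as [v1 v2].
destruct b1 as [a1 a2], b2 as [c1 c2], b3 as [e1 e2], b4 as [f1 f2], p as [p1 p2].
unfold phi in *; simpl in *. unfold cross in Huv; simpl in Huv.
unfold parallel, line_through, cross, psub in NP; simpl in NP.
unfold line_through, padd, pscale, psub in Ht, Hs; simpl in Ht, Hs.
injection Ht; injection Hs; intros G1 G2 G3 G4.
apply (MCc P _ _ _ _ _ _ _ _ _ _ t s HM H1 H2 H3 H4).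
- intro E. apply NP.
  assert (E2 : ((c1 - a1) * (f2 - e2) - (c2 - a2) * (f1 - e1)) * (u1 * v2 - u2 * v1) = 0) by (rewrite <- E; ring).
  apply Rmult_integral in E2. destruct E2; [auto | contradiction].
- rewrite G4, G3; ring.
- rewrite G4, G3; ring.
- rewrite G2, G1; ring.
- rewrite G2, G1; ring.
Qed.

Lemma dense_transport P W u v : cross u v <> 0 ->
  (forall z, Approx (fun z => P (phi W u v z)) z) -> forall x, Approx P x.
Proof.
intros Huv H x e He.
destruct W as [w1 w2], u as [u1 u2], v as [v1 v2], x as [x1 x2].
unfold cross in Huv; simpl in Huv.
set (K := 1 + 2 * (u1^2 + u2^2 + v1^2 + v2^2)).
assert (HK : 1 <= K) by (unfold K; nra).
set (z := (((x1 - w1) * v2 - (x2 - w2) * v1) / (u1 * v2 - u2 * v1), (u1 * (x2 - w2) - u2 * (x1 - w1)) / (u1 * v2 - u2 * v1))).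
assert (Ez : phi (w1,w2) (u1,u2) (v1,v2) z = (x1, x2)).
{ unfold phi, z; simpl. f_equal; field; auto. }
destruct (H z (e / K) ltac:(apply Rdiv_lt_0_compat; lra)) as [y [Py Dy]].
exists (phi (w1,w2) (u1,u2) (v1,v2) y). split; auto.
rewrite <- Ez.
destruct z as [z1 z2], y as [y1 y2]. unfold phi, dist2 in *; cbn [fst snd] in *.
set (d1 := z1 - y1) in *. set (d2 := z2 - y2) in *.
assert (E : (w1 + z1 * u1 + z2 * v1 - (w1 + y1 * u1 + y2 * v1)) ^ 2 +
   (w2 + z1 * u2 + z2 * v2 - (w2 + y1 * u2 + y2 * v2)) ^ 2 = (d1 * u1 + d2 * v1)^2 + (d1*u2 + d2*v2)^2)
  by (unfold d1, d2; ring).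
rewrite E.
assert (B : (d1 * u1 + d2 * v1)^2 + (d1*u2 + d2*v2)^2 <= K * (d1^2 + d2^2)).
{ unfold K. pose proof (pow2_ge_0 (d1*u1 - d2*v1)). pose proof (pow2_ge_0 (d1*u2 - d2*v2)).
  pose proof (pow2_ge_0 d1). pose proof (pow2_ge_0 d2).
  pose proof (pow2_ge_0 (d1*v1)). pose proof (pow2_ge_0 (d2*u1)).
  pose proof (pow2_ge_0 (d1*v2)). pose proof (pow2_ge_0 (d2*u2)). nra. }
assert (B2 : K * (d1^2 + d2^2) < K * (e / K) ^ 2) by (apply Rmult_lt_compat_l; lra).
assert (B3 : K * (e / K) ^ 2 <= e ^ 2).
{ replace (K * (e / K) ^ 2) with (e^2 / K) by (field; lra).
  apply Rmult_le_reg_r with K; [lra|]. unfold Rdiv. rewrite Rmult_assoc, Rinv_l by lra.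
  pose proof (pow2_ge_0 e). nra. }
lra.
Qed.

Set Bullet Behavior "Strict Subproofs".

Lemma floorlem c y : 0 < c -> 0 <= y -> exists j : nat, INR j * c <= y < INR j * c + c.
Proof.
intros Hc Hy. destruct (INR_archimed c y Hc) as [n Hn].
revert y Hy Hn. induction n as [|n IH]; intros y Hy Hn.
- simpl in Hn. lra.
- rewrite S_INR in Hn. destruct (Rlt_or_le y (INR n * c)) as [H|H].
  + apply IH; lra.
  + exists n. lra.
Qed.

Lemma iter_t (Sg : R -> Prop) c : (forall s, Sg s -> Sg (s + c)) ->
  forall k s, Sg s -> Sg (s + INR k * c).
Proof.
intros H k. induction k as [|k IH]; intros s Hs.
- simpl. replace (s + 0 * c) with s by ring. auto.
- rewrite S_INR. replace (s + (INR k + 1) * c) with ((s + INR k * c) + c) by ring. auto.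
Qed.

Lemma cover u c rL : 0 < c -> c <= rL -> forall m : nat, forall x, u <= x <= u + INR m * c + rL ->
  exists j : nat, (j <= m)%nat /\ u + INR j * c <= x <= u + INR j * c + rL.
Proof.
intros Hc Hr m. induction m as [|m IH]; intros x Hx.
- exists 0%nat. simpl in *. split; [lia|lra].
- rewrite S_INR in Hx. destruct (Rle_or_lt x (u + INR m * c + rL)) as [H|H].
  + destruct (IH x ltac:(lra)) as [j [Hj1 Hj2]]. exists j. split; [lia|lra].
  + exists (S m). rewrite S_INR. split; [lia|lra].
Qed.

Lemma IFS (Sg : R -> Prop) c r g s0 : 0 < c -> 0 < r < 1 ->
  (forall s, Sg s -> Sg (s + c)) -> (forall s, Sg s -> Sg (r * s + g)) -> Sg s0 ->
  exists u, s0 <= u /\ forall x, u <= x -> forall e, 0 < e -> exists s, Sg s /\ Rabs (s - x) < e.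
Proof.
intros Hc Hr Ht Hg H0.
destruct (INR_archimed r (1 - r) ltac:(lra)) as [N HN].
set (L := INR N * c / (1 - r)).
assert (HL : c <= r * L).
{ unfold L. apply Rmult_le_reg_r with (1 - r); [lra|].
  replace (r * (INR N * c / (1 - r)) * (1 - r)) with ((INR N * r) * c) by (field; lra).
  nra. }
assert (HL0 : 0 < L) by nra.
assert (HLc : c <= L) by nra.
assert (HL1 : L = INR N * c + r * L) by (unfold L; field; lra).
destruct (INR_archimed c (s0 * (1 - r) - g) Hc) as [k0 Hk0].
set (u := (g + INR k0 * c) / (1 - r)).
assert (Hu : s0 <= u).
{ unfold u. apply Rmult_le_reg_r with (1 - r); [lra|]. unfold Rdiv.
  rewrite Rmult_assoc, Rinv_l by lra. lra. }
assert (Hfix : r * u + g + INR k0 * c = u) by (unfold u; field; lra).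
assert (Claim : forall n : nat, forall x, u <= x <= u + L ->
   exists s, Sg s /\ u <= s <= u + L /\ Rabs (s - x) <= r ^ n * L).
{ induction n as [|n IH]; intros x Hx.
  - destruct (floorlem c (u - s0) Hc ltac:(lra)) as [j [Hj1 Hj2]].
    exists (s0 + (INR j + 1) * c). split; [|split].
    + replace (s0 + (INR j + 1) * c) with (s0 + INR (S j) * c) by (rewrite S_INR; ring).
      apply iter_t; auto.
    + lra.
    + simpl. apply Rabs_le. lra.
  - assert (Hx2 : u <= x <= u + INR N * c + r * L) by lra.
    destruct (cover u c (r * L) Hc HL N x Hx2) as [j [Hj1 Hj2]].
    set (x' := u + (x - u - INR j * c) / r).
    assert (Hx' : u <= x' <= u + L).
    { unfold x'. split.
      - assert (0 <= (x - u - INR j * c) / r) by (unfold Rdiv; apply Rmult_le_pos; [lra | left; apply Rinv_0_lt_compat; lra]). lra.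
      - assert ((x - u - INR j * c) / r <= L).
        { apply Rmult_le_reg_r with r; [lra|]. unfold Rdiv. rewrite Rmult_assoc, Rinv_l by lra. lra. }
        lra. }
    destruct (IH x' Hx') as [s' [Hs'1 [Hs'2 Hs'3]]].
    exists (r * s' + g + INR (k0 + j) * c). split; [|split].
    + apply iter_t; auto.
    + rewrite plus_INR.
      assert (INR j <= INR N) by (apply le_INR; auto).
      assert (0 <= INR j) by apply pos_INR. nra.
    + rewrite plus_INR.
      replace (r * s' + g + (INR k0 + INR j) * c - x) with (r * (s' - x')).
      * rewrite Rabs_mult, Rabs_right by lra. simpl. nra.
      * unfold x'. set (q := (x - u - INR j * c) / r).
        assert (Hq : r * q = x - u - INR j * c) by (unfold q; field; lra).
        replace (r * (s' - (u + q))) with (r * s' - r * u - r * q) by ring.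
        replace (r * s' + g + (INR k0 + INR j) * c - x) with (r * s' + (g + INR k0 * c) + INR j * c - x) by ring.
        lra. }
assert (Hpow : Rabs r < 1) by (rewrite Rabs_right; lra).
exists u. split; auto. intros x Hx e He.
destruct (pow_lt_1_zero r Hpow (e / L) ltac:(apply Rdiv_lt_0_compat; lra)) as [n Hn].
destruct (floorlem c (x - u) Hc ltac:(lra)) as [j [Hj1 Hj2]].
destruct (Claim n (x - INR j * c) ltac:(lra)) as [s [Hs1 [Hs2 Hs3]]].
exists (s + INR j * c). split.
- apply iter_t; auto.
- specialize (Hn n (le_n n)). rewrite Rabs_right in Hn by (apply Rle_ge, pow_le; lra).
  replace (s + INR j * c - x) with (s - (x - INR j * c)) by ring.
  assert (r ^ n * L < e).
  { apply Rmult_lt_reg_r with (/ L). apply Rinv_0_lt_compat; lra.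
    rewrite Rmult_assoc, Rinv_r by lra. lra. }
  lra.
Qed.

Set Bullet Behavior "Strict Subproofs".

Definition Good (A : pt -> Prop) : Prop :=
  MC A /\ Closed A /\ A (0,0) /\ A (1,0) /\ A (0,1).

Lemma ProjXY A p1 p2 x : Good A -> A (p1,p2) -> A (x,0) -> x <> p1 -> A (0, p2 * x / (x - p1)).
Proof.
intros [HM [_ [H0 [_ H01]]]] HP Hx Hne.
apply (MCc A p1 p2 x 0 0 0 0 1 0 (p2 * x / (x - p1)) (- p1 / (x - p1)) (p2 * x / (x - p1)) HM HP Hx H0 H01).
- intro E. apply Hne. lra.
- field. lra.
- field. lra.
- ring.
- ring.
Qed.

Lemma ProjYX A q1 q2 y : Good A -> A (q1,q2) -> A (0,y) -> y <> q2 -> A (q1 * y / (y - q2), 0).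
Proof.
intros [HM [_ [H0 [H10 _]]]] HQ Hy Hne.
apply (MCc A q1 q2 0 y 0 0 1 0 (q1 * y / (y - q2)) 0 (- q2 / (y - q2)) (q1 * y / (y - q2)) HM HQ Hy H0 H10).
- intro E. apply Hne. lra.
- field. lra.
- field. lra.
- ring.
- ring.
Qed.

Lemma NegStep A p1 p2 q1 q2 s : Good A -> A (p1,p2) -> A (q1,q2) -> 0 < p1 -> q1 < 0 -> p2 * q2 < 0 ->
  0 < s -> A (- / s, 0) ->
  A (- / (q2 * p1 / (q1 * p2) * s + (q2 - p2) / (q1 * p2)), 0) /\
  0 < q2 * p1 / (q1 * p2) * s + (q2 - p2) / (q1 * p2).
Proof.
intros HG HP HQ Hp1 Hq1 Hpq Hs Hx.
assert (Hp2 : p2 <> 0) by (intro E; subst; lra).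
assert (Hq2 : q2 <> 0) by (intro E; subst; lra).
assert (Hx1 : - / s <> p1) by (assert (0 < / s) by (apply Rinv_0_lt_compat; lra); lra).
pose proof (ProjXY A p1 p2 (- / s) HG HP Hx Hx1) as Hy.
assert (Ey : p2 * - / s / (- / s - p1) = p2 / (1 + p1 * s)) by (field; split; nra).
rewrite Ey in Hy.
assert (Hy2 : p2 / (1 + p1 * s) <> q2).
{ intro E. assert (0 < p2 * (p2 / (1 + p1 * s))).
  { replace (p2 * (p2 / (1 + p1 * s))) with (p2 * p2 / (1 + p1 * s)) by (field; nra).
    apply Rdiv_lt_0_compat; nra. }
  rewrite E in H. lra. }
pose proof (ProjYX A q1 q2 _ HG HQ Hy Hy2) as Hh.
set (D := q2 * (1 + p1 * s) - p2).
assert (HD : D * p2 < 0).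
{ unfold D. assert (H1 : 0 < 1 + p1 * s) by nra.
  assert (H2 : p2 * q2 * (1 + p1 * s) < 0) by (apply Rmult_neg_pos; auto).
  assert (0 <= p2 * p2) by nra. nra. }
assert (HD0 : D <> 0) by (intro E; rewrite E in HD; lra).
assert (Ek : q2 * p1 / (q1 * p2) * s + (q2 - p2) / (q1 * p2) = D / (q1 * p2)) by (unfold D; field; lra).
rewrite Ek. split.
- replace (- / (D / (q1 * p2))) with (q1 * (p2 / (1 + p1 * s)) / (p2 / (1 + p1 * s) - q2)); auto.
  unfold D. field. repeat split; try lra; try nra.
  intro E. apply HD0. unfold D. nra.
  intro E. apply HD0. unfold D. lra.
- assert (E2 : D / (q1 * p2) = (D * p2) / (q1 * (p2 * p2))) by (field; lra).
  rewrite E2. apply Rdiv_neg_neg; auto.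
  assert (0 < p2 * p2) by nra. nra.
Qed.

Lemma PosStep A p1 p2 q1 q2 s : Good A -> A (p1,p2) -> A (q1,q2) -> p1 < 0 -> 0 < q1 -> p2 * q2 < 0 ->
  0 < s -> A (/ s, 0) ->
  A (/ (q2 * p1 / (q1 * p2) * s + (p2 - q2) / (q1 * p2)), 0) /\
  0 < q2 * p1 / (q1 * p2) * s + (p2 - q2) / (q1 * p2).
Proof.
intros HG HP HQ Hp1 Hq1 Hpq Hs Hx.
assert (Hp2 : p2 <> 0) by (intro E; subst; lra).
assert (Hq2 : q2 <> 0) by (intro E; subst; lra).
assert (Hx1 : / s <> p1) by (assert (0 < / s) by (apply Rinv_0_lt_compat; lra); lra).
pose proof (ProjXY A p1 p2 (/ s) HG HP Hx Hx1) as Hy.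
assert (Ey : p2 * / s / (/ s - p1) = p2 / (1 - p1 * s)) by (field; split; nra).
rewrite Ey in Hy.
assert (Hy2 : p2 / (1 - p1 * s) <> q2).
{ intro E. assert (0 < p2 * (p2 / (1 - p1 * s))).
  { replace (p2 * (p2 / (1 - p1 * s))) with (p2 * p2 / (1 - p1 * s)) by (field; nra).
    apply Rdiv_lt_0_compat; nra. }
  rewrite E in H. lra. }
pose proof (ProjYX A q1 q2 _ HG HQ Hy Hy2) as Hh.
set (D := p2 - q2 * (1 - p1 * s)).
assert (HD : 0 < D * p2).
{ unfold D. assert (H1 : 0 < 1 - p1 * s) by nra.
  assert (H2 : p2 * q2 * (1 - p1 * s) < 0) by (apply Rmult_neg_pos; auto).
  assert (0 < p2 * p2) by nra. nra. }
assert (HD0 : D <> 0) by (intro E; rewrite E in HD; lra).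
assert (Ek : q2 * p1 / (q1 * p2) * s + (p2 - q2) / (q1 * p2) = D / (q1 * p2)) by (unfold D; field; lra).
rewrite Ek. split.
- replace (/ (D / (q1 * p2))) with (q1 * (p2 / (1 - p1 * s)) / (p2 / (1 - p1 * s) - q2)); auto.
  unfold D. field. repeat split; try lra; try nra.
  all: intro E; apply HD0; unfold D; nra.
- assert (E2 : D / (q1 * p2) = (D * p2) / (q1 * (p2 * p2))) by (field; lra).
  rewrite E2. apply Rdiv_lt_0_compat; auto.
  assert (0 < p2 * p2) by nra. nra.
Qed.

Set Bullet Behavior "Strict Subproofs".

Lemma Recip x e : 0 < x -> 0 < e -> exists d, 0 < d /\ forall s, Rabs (s - x) < d ->
  0 < s /\ Rabs (/ s - / x) < e.
Proof.
intros Hx He. assert (Hexx : 0 < e * x * x) by (apply Rmult_lt_0_compat; [apply Rmult_lt_0_compat|]; lra).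
exists (Rmin (x/2) (e * x * x / 2)). split.
{ apply Rmin_pos; lra. }
intros s Hs. pose proof (Rmin_l (x/2) (e*x*x/2)). pose proof (Rmin_r (x/2) (e*x*x/2)).
apply Rabs_def2 in Hs. assert (Hs0 : x / 2 < s) by lra. split; [lra|].
replace (/ s - / x) with ((x - s) / (s * x)) by (field; lra).
unfold Rdiv. rewrite Rabs_mult, Rabs_inv. rewrite (Rabs_right (s * x)) by nra. fold (Rabs (x - s) / (s * x)).
apply Rmult_lt_reg_r with (s * x); [nra|]. unfold Rdiv. rewrite Rmult_assoc, Rinv_l by nra.
rewrite Rmult_1_r. assert (e * x * x / 2 < e * (s * x)).
{ assert (Ee : e * x * x / 2 = e * (x/2 * x)) by field. rewrite Ee.
  apply Rmult_lt_compat_l; [lra|]. nra. }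
apply Rabs_def1; lra.
Qed.

Lemma sq_lt_of_abs u e : 0 < e -> Rabs u < e -> u ^ 2 < e ^ 2.
Proof. intros He H. apply Rabs_def2 in H. nra. Qed.

Lemma NegSegLemma A u : Good A -> 0 < u ->
  (forall x, u <= x -> forall e, 0 < e -> exists s, (0 < s /\ A (- / s, 0)) /\ Rabs (s - x) < e) ->
  forall a, - / u <= a < 0 -> A (a, 0).
Proof.
intros [HM [HC _]] Hu H a Ha. apply HC. intros e He.
set (x := - / a).
assert (Hx0 : 0 < x) by (unfold x; assert (0 < - a) by lra; rewrite <- Rinv_opp; apply Rinv_0_lt_compat; lra).
assert (Hxu : u <= x).
{ unfold x. rewrite <- Rinv_opp. rewrite <- (Rinv_inv u). apply Rinv_le_contravar; [lra|].
  lra. }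
destruct (Recip x e Hx0 He) as [d [Hd Hd2]].
destruct (H x Hxu d Hd) as [s [[Hs0 Hs] Hsx]].
exists (- / s, 0). split; auto.
destruct (Hd2 s Hsx) as [_ Hr].
unfold dist2; cbn [fst snd].
assert (Ea : a = - / x) by (unfold x; rewrite Rinv_opp, Rinv_inv; ring).
replace ((a - - / s) ^ 2 + (0 - 0) ^ 2) with ((/ s - / x) ^ 2) by (rewrite Ea; ring).
apply sq_lt_of_abs; auto.
Qed.

Set Bullet Behavior "Strict Subproofs".

Lemma SegXYpos A p1 p2 al : Good A -> A (p1,p2) -> 0 < p1 -> 0 < p2 -> 0 < al ->
  (forall a, - al <= a < 0 -> A (a,0)) -> exists be, 0 < be /\ forall y, 0 < y <= be -> A (0,y).
Proof.
intros HG HP Hp1 Hp2 Hal Hseg.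
assert (Hb : 0 < al * p2 / (2 * p1)) by (apply Rdiv_lt_0_compat; nra).
exists (Rmin (p2/2) (al * p2 / (2 * p1))). split; [apply Rmin_pos; lra|].
intros y Hy. pose proof (Rmin_l (p2/2) (al * p2 / (2 * p1))). pose proof (Rmin_r (p2/2) (al * p2 / (2 * p1))).
set (a := p1 * y / (y - p2)).
assert (Ha0 : a < 0).
{ unfold a. replace (p1 * y / (y - p2)) with (- (p1 * y / (p2 - y))) by (field; lra).
  assert (0 < p1 * y / (p2 - y)) by (apply Rdiv_lt_0_compat; nra). lra. }
assert (Ha1 : - al <= a).
{ unfold a. replace (p1 * y / (y - p2)) with (- (p1 * y / (p2 - y))) by (field; lra).
  assert (p1 * y / (p2 - y) <= al); [|lra].
  apply Rmult_le_reg_r with (p2 - y); [lra|]. unfold Rdiv. rewrite Rmult_assoc, Rinv_l by lra.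
  rewrite Rmult_1_r.
  assert (y <= al * p2 / (2 * p1)) by lra.
  assert (p1 * y <= al * p2 / 2).
  { apply Rmult_le_reg_r with (/ p1). apply Rinv_0_lt_compat; lra.
    replace (p1 * y * / p1) with y by (field; lra).
    replace (al * p2 / 2 * / p1) with (al * p2 / (2 * p1)) by (field; lra). lra. }
  nra. }
pose proof (ProjXY A p1 p2 a HG HP (Hseg a (conj Ha1 Ha0)) ltac:(lra)) as K.
replace (p2 * a / (a - p1)) with y in K; auto.
unfold a. field. split; [lra|]. intro E. assert (p1 * p2 = 0) by nra. nra.
Qed.

Lemma SegXYneg A p1 p2 al : Good A -> A (p1,p2) -> 0 < p1 -> p2 < 0 -> 0 < al ->
  (forall a, - al <= a < 0 -> A (a,0)) -> exists be, 0 < be /\ forall y, - be <= y < 0 -> A (0,y).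
Proof.
intros HG HP Hp1 Hp2 Hal Hseg.
assert (Hb : 0 < al * (- p2) / (2 * p1)) by (apply Rdiv_lt_0_compat; nra).
exists (Rmin (- p2/2) (al * (- p2) / (2 * p1))). split; [apply Rmin_pos; lra|].
intros y Hy. pose proof (Rmin_l (- p2/2) (al * (- p2) / (2 * p1))). pose proof (Rmin_r (- p2/2) (al * (- p2) / (2 * p1))).
set (a := p1 * y / (y - p2)).
assert (Ha0 : a < 0).
{ unfold a. replace (p1 * y / (y - p2)) with (- (p1 * (- y) / (y - p2))) by (field; lra).
  assert (0 < p1 * (- y) / (y - p2)) by (apply Rdiv_lt_0_compat; nra). lra. }
assert (Ha1 : - al <= a).
{ unfold a. replace (p1 * y / (y - p2)) with (- (p1 * (- y) / (y - p2))) by (field; lra).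
  assert (p1 * (- y) / (y - p2) <= al); [|lra].
  apply Rmult_le_reg_r with (y - p2); [lra|]. unfold Rdiv. rewrite Rmult_assoc, Rinv_l by lra.
  rewrite Rmult_1_r.
  assert (- y <= al * (- p2) / (2 * p1)) by lra.
  assert (p1 * (- y) <= al * (- p2) / 2).
  { apply Rmult_le_reg_r with (/ p1). apply Rinv_0_lt_compat; lra.
    replace (p1 * (- y) * / p1) with (- y) by (field; lra).
    replace (al * (- p2) / 2 * / p1) with (al * (- p2) / (2 * p1)) by (field; lra). lra. }
  nra. }
pose proof (ProjXY A p1 p2 a HG HP (Hseg a (conj Ha1 Ha0)) ltac:(lra)) as K.
replace (p2 * a / (a - p1)) with y in K; auto.
unfold a. field. split; [lra|]. intro E. assert (p1 * p2 = 0) by nra. nra.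
Qed.

Lemma SegYXpos A q1 q2 be : Good A -> A (q1,q2) -> 0 < q1 -> q2 < 0 -> 0 < be ->
  (forall y, 0 < y <= be -> A (0,y)) -> exists ga, 0 < ga /\ forall x, 0 < x <= ga -> A (x,0).
Proof.
intros HG HQ Hq1 Hq2 Hbe Hseg.
assert (Hb : 0 < be * q1 / (2 * (- q2))) by (apply Rdiv_lt_0_compat; nra).
exists (Rmin (q1/2) (be * q1 / (2 * (- q2)))). split; [apply Rmin_pos; lra|].
intros x Hx. pose proof (Rmin_l (q1/2) (be * q1 / (2 * (- q2)))). pose proof (Rmin_r (q1/2) (be * q1 / (2 * (- q2)))).
set (y := q2 * x / (x - q1)).
assert (Ey : y = (- q2) * x / (q1 - x)) by (unfold y; field; lra).
assert (Hy0 : 0 < y) by (rewrite Ey; apply Rdiv_lt_0_compat; nra).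
assert (Hy1 : y <= be).
{ rewrite Ey.
  apply Rmult_le_reg_r with (q1 - x); [lra|]. unfold Rdiv. rewrite Rmult_assoc, Rinv_l by lra.
  rewrite Rmult_1_r.
  assert (x <= be * q1 / (2 * (- q2))) by lra.
  assert ((- q2) * x <= be * q1 / 2).
  { apply Rmult_le_reg_r with (/ (- q2)). apply Rinv_0_lt_compat; lra.
    replace (- q2 * x * / - q2) with x by (field; lra).
    replace (be * q1 / 2 * / - q2) with (be * q1 / (2 * - q2)) by (field; lra). lra. }
  nra. }
pose proof (ProjYX A q1 q2 y HG HQ (Hseg y (conj Hy0 Hy1)) ltac:(lra)) as K.
replace (q1 * y / (y - q2)) with x in K; auto.
unfold y. field. split; [lra|]. intro E. assert (q1 * q2 = 0) by nra. nra.
Qed.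

Lemma GlobalLemma A al be : Good A -> 0 < al -> 0 < be ->
  (forall x, 0 < Rabs x <= al -> A (x,0)) -> (forall y, 0 < Rabs y <= be -> A (0,y)) ->
  forall z, A z.
Proof.
intros HG Hal Hbe HX HY.
destruct HG as [HM [HC _]].
assert (Off : forall x y, x <> 0 -> y <> 0 -> A (x,y)).
{ intros x y Hx Hy.
  destruct (INR_archimed 1 (2 + Rabs x / al + Rabs y / be) ltac:(lra)) as [n Hn].
  rewrite Rmult_1_r in Hn.
  set (K := INR n) in *.
  assert (Hax : 0 < Rabs x) by (apply Rabs_pos_lt; auto).
  assert (Hay : 0 < Rabs y) by (apply Rabs_pos_lt; auto).
  assert (Hxa : 0 <= Rabs x / al) by (apply Rlt_le, Rdiv_lt_0_compat; lra).
  assert (Hyb : 0 <= Rabs y / be) by (apply Rlt_le, Rdiv_lt_0_compat; lra).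
  assert (HK2 : 2 < K) by lra.
  assert (Bx : forall M, K <= M -> 0 < Rabs (x / M) <= al).
  { intros M HM0. unfold Rdiv. rewrite Rabs_mult, Rabs_inv, (Rabs_right M) by lra.
    split. apply Rmult_lt_0_compat; auto. apply Rinv_0_lt_compat; lra.
    apply Rmult_le_reg_r with M; [lra|]. rewrite Rmult_assoc, Rinv_l by lra.
    assert (Rabs x <= al * K).
    { apply Rmult_le_reg_r with (/ al). apply Rinv_0_lt_compat; lra.
      replace (al * K * / al) with K by (field; lra). unfold Rdiv in Hxa. lra. }
    nra. }
  assert (By : forall M, K - 1 <= M -> 0 < Rabs (- y / M) <= be).
  { intros M HM0. unfold Rdiv. rewrite Rabs_mult, Rabs_inv, Rabs_Ropp, (Rabs_right M) by lra.
    split. apply Rmult_lt_0_compat; auto. apply Rinv_0_lt_compat; lra.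
    apply Rmult_le_reg_r with M; [lra|]. rewrite Rmult_assoc, Rinv_l by lra.
    assert (Rabs y <= be * (K - 1)).
    { apply Rmult_le_reg_r with (/ be). apply Rinv_0_lt_compat; lra.
      replace (be * (K - 1) * / be) with (K - 1) by (field; lra). unfold Rdiv in Hyb. lra. }
    nra. }
  apply (MCc A (x / K) 0 0 (- y / (K - 1)) (x / (K + 1)) 0 0 (- y / K) x y (1 - K) (- K) HM).
  - apply HX, Bx; lra.
  - apply HY, By; lra.
  - apply HX, Bx; lra.
  - apply HY, By; lra.
  - replace ((0 - x / K) * (- y / K - 0) - (- y / (K - 1) - 0) * (0 - x / (K + 1)))
      with (- (x * y) / (K * K * ((K - 1) * (K + 1)))) by (field; repeat split; lra).
    unfold Rdiv. intro E. apply Rmult_integral in E. destruct E as [E|E].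
    + assert (x * y = 0) by lra. apply Rmult_integral in H. tauto.
    + apply Rinv_neq_0_compat in E; auto.
      assert (0 < K * K * ((K - 1) * (K + 1))) by (apply Rmult_lt_0_compat; nra). lra.
  - field; lra.
  - field; lra.
  - field; lra.
  - field; lra. }
intro z. destruct z as [x y]. apply HC. intros e He.
set (x' := if Req_EM_T x 0 then e / 2 else x).
set (y' := if Req_EM_T y 0 then e / 2 else y).
exists (x', y'). split.
- apply Off; unfold x', y'; destruct (Req_EM_T x 0), (Req_EM_T y 0); lra.
- unfold dist2, x', y'; cbn [fst snd]. destruct (Req_EM_T x 0), (Req_EM_T y 0); subst; nra.
Qed.

Set Bullet Behavior "Strict Subproofs".
Lemma rhoH a b c : 0 < a -> 0 < b -> 0 < c ->
  (b * (- (a / (1 + a * c)) + a) / (a * b - - (a / (1 + a * c)))) * (/ (1 + 2 * c) * (b + 1) / (b * / (1 + 2 * c) + 1)) /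
  ((- (a / (1 + a * c)) * a * (1 + b) / (a * b - - (a / (1 + a * c)))) * (b * (/ (1 + 2 * c) - 1) / (b * / (1 + 2 * c) + 1))) = 1 / 2.
Proof.
intros Ha Hb Hc.
assert (H1 : 0 < 1 + a * c) by nra. assert (H2 : 0 < 1 + 2 * c) by nra.
assert (H3 : 0 < a * b * (1 + a * c)) by (repeat apply Rmult_lt_0_compat; lra).
field. repeat split; try nra.
Qed.

Set Bullet Behavior "Strict Subproofs".

Lemma orbit_pos A c : (forall s, 0 < s -> A (/ s, 0) -> A (/ (s + c), 0)) -> 0 < c ->
  forall j : nat, A (/ (1 + INR j * c), 0) -> A (/ (1 + INR (S j) * c), 0).
Proof.
intros H Hc j Hj. rewrite S_INR. replace (1 + (INR j + 1) * c) with ((1 + INR j * c) + c) by ring.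
apply H; auto. assert (0 <= INR j) by apply pos_INR. nra.
Qed.

Theorem Norm A a b : Good A -> A (- a, 0) -> A (0, - b) -> 0 < a -> 0 < b -> a * b <> 1 ->
  forall z, A z.
Proof.
intros HG Hc3 Hc4 Ha Hb Hab.
pose proof HG as [HM [HC [H00 [H10 H01]]]].
set (k := a * (1 + b)). set (m := b * (1 + a)).
assert (Hk : 0 < k) by (unfold k; nra). assert (Hm : 0 < m) by (unfold m; nra).
assert (Hab' : 1 - a * b <> 0) by lra.
assert (HZ : A (- k / (1 - a * b), - m / (1 - a * b))).
{ apply (MCc A 1 0 0 (- b) 0 1 (- a) 0 _ _ ((1 + a) / (1 - a * b)) ((1 + b) / (1 - a * b)) HM H10 Hc4 H01 Hc3).
  - replace ((0 - 1) * (0 - 1) - (- b - 0) * (- a - 0)) with (1 - a * b) by ring. auto.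
  - unfold k. field. auto.
  - unfold m. field. auto.
  - unfold k. field. auto.
  - unfold m. field. auto. }
set (u1 := k / (k + m)). set (u2 := m / (k + m)).
set (v1 := - k / (2 + a + b)). set (v2 := - m / (2 + a + b)).
assert (HU1 : A (u1, u2)).
{ apply (MCc A 0 0 (- k / (1 - a * b)) (- m / (1 - a * b)) 1 0 0 1 _ _ (- (1 - a * b) / (k + m)) (m / (k + m)) HM H00 HZ H10 H01).
  - replace ((- k / (1 - a * b) - 0) * (1 - 0) - (- m / (1 - a * b) - 0) * (0 - 1)) with (- (k + m) / (1 - a * b)) by (field; auto).
    unfold Rdiv. intro E. apply Rmult_integral in E. destruct E as [E|E]. lra.
    apply Rinv_neq_0_compat in E; auto.
  - unfold u1. field. split; lra.
  - unfold u2. field. split; lra.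
  - unfold u1. field. lra.
  - unfold u2. field. lra. }
assert (HU3 : A (v1, v2)).
{ apply (MCc A 0 0 (- k / (1 - a * b)) (- m / (1 - a * b)) (- a) 0 0 (- b) _ _ ((1 - a * b) / (2 + a + b)) ((1 + a) / (2 + a + b)) HM H00 HZ Hc3 Hc4).
  - replace ((- k / (1 - a * b) - 0) * (- b - 0) - (- m / (1 - a * b) - 0) * (0 - - a)) with (a * b * (2 + a + b) / (1 - a * b)) by (unfold k, m; field; auto).
    unfold Rdiv. intro E. apply Rmult_integral in E. destruct E as [E|E].
    + assert (0 < a * b * (2 + a + b)) by (apply Rmult_lt_0_compat; nra). lra.
    + apply Rinv_neq_0_compat in E; auto.
  - unfold v1. field. split; lra.
  - unfold v2. field. split; lra.
  - unfold v1, k. field. lra.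
  - unfold v2, m. field. lra. }
assert (Hu1 : 0 < u1) by (unfold u1; apply Rdiv_lt_0_compat; lra).
assert (Hu2 : 0 < u2) by (unfold u2; apply Rdiv_lt_0_compat; lra).
assert (Hv1 : v1 < 0) by (unfold v1; unfold Rdiv; rewrite Ropp_mult_distr_l_reverse; apply Ropp_lt_gt_0_contravar; apply Rdiv_lt_0_compat; lra).
assert (Hv2 : v2 < 0) by (unfold v2; unfold Rdiv; rewrite Ropp_mult_distr_l_reverse; apply Ropp_lt_gt_0_contravar; apply Rdiv_lt_0_compat; lra).
set (cT := ((k + m) + (2 + a + b)) / k).
assert (HcT : 0 < cT) by (unfold cT; apply Rdiv_lt_0_compat; lra).
assert (Tneg : forall s, 0 < s -> A (- / s, 0) -> A (- / (s + cT), 0)).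
{ intros s Hs Hx. destruct (NegStep A u1 u2 v1 v2 s HG HU1 HU3 Hu1 Hv1 ltac:(nra) Hs Hx) as [K _].
  replace (v2 * u1 / (v1 * u2) * s + (v2 - u2) / (v1 * u2)) with (s + cT) in K; auto.
  unfold u1, u2, v1, v2, cT. field. repeat split; lra. }
assert (Tpos : forall s, 0 < s -> A (/ s, 0) -> A (/ (s + cT), 0)).
{ intros s Hs Hx. destruct (PosStep A v1 v2 u1 u2 s HG HU3 HU1 Hv1 Hu1 ltac:(nra) Hs Hx) as [K _].
  replace (u2 * v1 / (u1 * v2) * s + (v2 - u2) / (u1 * v2)) with (s + cT) in K; auto.
  unfold u1, u2, v1, v2, cT. field. repeat split; lra. }
set (x := / (1 + 2 * cT)).
assert (Hx : A (x, 0)).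
{ assert (K0 : A (/ (1 + INR 0 * cT), 0)) by (simpl; replace (/ (1 + 0 * cT)) with 1 by (field; lra); auto).
  pose proof (orbit_pos A cT Tpos HcT 1 (orbit_pos A cT Tpos HcT 0 K0)) as K2.
  replace (INR 2) with 2 in K2 by (simpl; ring). exact K2. }
assert (Hx0 : 0 < x) by (unfold x; apply Rinv_0_lt_compat; lra).
assert (Hx1 : x < 1) by (unfold x; rewrite <- Rinv_1; apply Rinv_lt_contravar; lra).
set (xp := - (a / (1 + a * cT))).
assert (Hxp : A (xp, 0)).
{ assert (K : A (- / (/ a), 0)) by (rewrite Rinv_inv; auto).
  pose proof (Tneg (/ a) ltac:(apply Rinv_0_lt_compat; lra) K) as K2.
  replace (- / (/ a + cT)) with xp in K2; auto. unfold xp. field. split; nra. }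
assert (Hxp0 : xp < 0) by (unfold xp; assert (0 < a / (1 + a * cT)) by (apply Rdiv_lt_0_compat; nra); lra).
assert (Hxp1 : - a < xp).
{ unfold xp. assert (a / (1 + a * cT) < a); [|lra].
  assert (0 < 1 + a * cT) by nra.
  apply Rmult_lt_reg_r with (1 + a * cT); [nra|]. unfold Rdiv. rewrite Rmult_assoc, Rinv_l by lra.
  assert (0 < a * a * cT) by (apply Rmult_lt_0_compat; [apply Rmult_lt_0_compat|]; lra). nra. }
set (r1 := x * (b + 1) / (b * x + 1)). set (r2 := b * (x - 1) / (b * x + 1)).
assert (HR : A (r1, r2)).
{ apply (MCc A 0 1 x 0 1 0 0 (- b) _ _ ((b + 1) / (b * x + 1)) ((1 - x) / (b * x + 1)) HM H01 Hx H10 Hc4).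
  - replace ((x - 0) * (- b - 0) - (0 - 1) * (0 - 1)) with (- (b * x + 1)) by ring. nra.
  - unfold r1. field. nra.
  - unfold r2. field. nra.
  - unfold r1. field. nra.
  - unfold r2. field. nra. }
set (q1 := xp * a * (1 + b) / (a * b - xp)). set (q2 := b * (xp + a) / (a * b - xp)).
assert (Habx : 0 < a * b - xp) by nra.
assert (HQ : A (q1, q2)).
{ apply (MCc A 0 (- b) xp 0 0 1 (- a) 0 _ _ (a * (1 + b) / (a * b - xp)) (- xp * (1 + b) / (a * b - xp)) HM Hc4 Hxp H01 Hc3).
  - replace ((xp - 0) * (0 - 1) - (0 - - b) * (- a - 0)) with (a * b - xp) by ring. lra.
  - unfold q1. field. lra.
  - unfold q2. field. lra.
  - unfold q1. field. lra.
  - unfold q2. field. lra. }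
assert (Hr1 : 0 < r1) by (unfold r1; apply Rdiv_lt_0_compat; nra).
assert (Hr2 : r2 < 0) by (unfold r2; replace (b * (x - 1) / (b * x + 1)) with (- (b * (1 - x) / (b * x + 1))) by (field; nra);
   assert (0 < b * (1 - x) / (b * x + 1)) by (apply Rdiv_lt_0_compat; nra); lra).
assert (Hq1 : q1 < 0) by (unfold q1; replace (xp * a * (1 + b) / (a * b - xp)) with (- ((- xp) * a * (1 + b) / (a * b - xp))) by (field; lra);
   assert (0 < (- xp) * a * (1 + b) / (a * b - xp)) by (apply Rdiv_lt_0_compat; [apply Rmult_lt_0_compat; [apply Rmult_lt_0_compat|]|]; lra); lra).
assert (Hq2 : 0 < q2) by (unfold q2; apply Rdiv_lt_0_compat; nra).
assert (Hrho : q2 * r1 / (q1 * r2) = 1 / 2).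
{ unfold q1, q2, r1, r2, x, xp. apply rhoH; auto. }
set (gH := (q2 - r2) / (q1 * r2)).
assert (Hneg : forall s, 0 < s -> A (- / s, 0) -> A (- / (1/2 * s + gH), 0) /\ 0 < 1/2 * s + gH).
{ intros s Hs Hy. destruct (NegStep A r1 r2 q1 q2 s HG HR HQ Hr1 Hq1 ltac:(nra) Hs Hy) as [K1 K2].
  rewrite Hrho in K1, K2. split; auto. }
destruct (IFS (fun s => 0 < s /\ A (- / s, 0)) cT (1/2) gH (/ a) HcT ltac:(lra)) as [u [HuL HuS]].
{ intros s [Hs Hy]. split; [lra|]. apply Tneg; auto. }
{ intros s [Hs Hy]. destruct (Hneg s Hs Hy). split; auto. }
{ split; [apply Rinv_0_lt_compat; lra|]. rewrite Rinv_inv; auto. }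
assert (Hu0 : 0 < u) by (assert (0 < / a) by (apply Rinv_0_lt_compat; lra); lra).
assert (NegX : forall a', - / u <= a' < 0 -> A (a', 0)).
{ apply (NegSegLemma A u HG Hu0). intros x0 Hx0' e He. exact (HuS x0 Hx0' e He). }
assert (Hiu : 0 < / u) by (apply Rinv_0_lt_compat; lra).
destruct (SegXYpos A u1 u2 (/ u) HG HU1 Hu1 Hu2 Hiu NegX) as [b1 [Hb1 PosY]].
destruct (SegXYneg A r1 r2 (/ u) HG HR Hr1 Hr2 Hiu NegX) as [b2 [Hb2 NegY]].
destruct (SegYXpos A r1 r2 b1 HG HR Hr1 Hr2 Hb1 PosY) as [g1 [Hg1 PosX]].
apply (GlobalLemma A (Rmin (/ u) g1) (Rmin b1 b2) HG (Rmin_pos _ _ Hiu Hg1) (Rmin_pos _ _ Hb1 Hb2)).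
- intros x0 [Hx0a Hx0b]. pose proof (Rmin_l (/ u) g1). pose proof (Rmin_r (/ u) g1).
  destruct (Rlt_or_le 0 x0) as [Hp|Hn].
  + rewrite Rabs_right in Hx0b by lra. apply PosX. lra.
  + assert (x0 <> 0) by (intro E; subst; rewrite Rabs_R0 in Hx0a; lra).
    rewrite Rabs_left in Hx0b by lra. apply NegX. lra.
- intros y0 [Hy0a Hy0b]. pose proof (Rmin_l b1 b2). pose proof (Rmin_r b1 b2).
  destruct (Rlt_or_le 0 y0) as [Hp|Hn].
  + rewrite Rabs_right in Hy0b by lra. apply PosY. lra.
  + assert (y0 <> 0) by (intro E; subst; rewrite Rabs_R0 in Hy0a; lra).
    rewrite Rabs_left in Hy0b by lra. apply NegY. lra.
Qed.

Set Bullet Behavior "Strict Subproofs".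

Lemma QuadLemma (S : pt -> Prop) w1 w2 x1 x2 y1 y2 la mu : MC S ->
  S (w1, w2) -> S (x1, x2) -> S (y1, y2) ->
  S (w1 + la * (x1 - w1), w2 + la * (x2 - w2)) -> S (w1 + mu * (y1 - w1), w2 + mu * (y2 - w2)) ->
  la < 0 -> mu < 0 -> (x1 - w1) * (y2 - w2) - (x2 - w2) * (y1 - w1) <> 0 -> la * mu <> 1 ->
  dense S.
Proof.
intros HM HW H1 H2 H3 H4 Hla Hmu Huv Hlm.
set (W := (w1, w2)). set (u := (x1 - w1, x2 - w2)). set (v := (y1 - w1, y2 - w2)).
assert (Hc : cross u v <> 0) by (unfold cross, u, v; simpl; auto).
set (S' := fun z => S (phi W u v z)).
assert (E : forall z1 z2, phi W u v (z1, z2) = (w1 + z1 * (x1 - w1) + z2 * (y1 - w1), w2 + z1 * (x2 - w2) + z2 * (y2 - w2))).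
{ intros. reflexivity. }
assert (HG : Good (Approx S')).
{ split; [|split; [|split; [|split]]].
  - apply Approx_MC. apply MC_transport; auto.
  - apply Approx_closed.
  - apply Approx_of. unfold S'. rewrite E. replace (w1 + 0 * (x1 - w1) + 0 * (y1 - w1), w2 + 0 * (x2 - w2) + 0 * (y2 - w2)) with (w1, w2) by (f_equal; ring). auto.
  - apply Approx_of. unfold S'. rewrite E. replace (w1 + 1 * (x1 - w1) + 0 * (y1 - w1), w2 + 1 * (x2 - w2) + 0 * (y2 - w2)) with (x1, x2) by (f_equal; ring). auto.
  - apply Approx_of. unfold S'. rewrite E. replace (w1 + 0 * (x1 - w1) + 1 * (y1 - w1), w2 + 0 * (x2 - w2) + 1 * (y2 - w2)) with (y1, y2) by (f_equal; ring). auto. }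
assert (Hall : forall z, Approx S' z).
{ apply (Norm (Approx S') (- la) (- mu) HG).
  - apply Approx_of. unfold S'. rewrite E. replace (w1 + - - la * (x1 - w1) + 0 * (y1 - w1), w2 + - - la * (x2 - w2) + 0 * (y2 - w2))
      with (w1 + la * (x1 - w1), w2 + la * (x2 - w2)) by (f_equal; ring). auto.
  - apply Approx_of. unfold S'. rewrite E. replace (w1 + 0 * (x1 - w1) + - - mu * (y1 - w1), w2 + 0 * (x2 - w2) + - - mu * (y2 - w2))
      with (w1 + mu * (y1 - w1), w2 + mu * (y2 - w2)) by (f_equal; ring). auto.
  - lra.
  - lra.
  - intro K. apply Hlm. lra. }
apply dense_Approx. apply (dense_transport S W u v Hc). exact Hall.
Qed.

Set Bullet Behavior "Strict Subproofs".

Lemma lm_ne X Y Z W : Y <> 0 -> W <> 0 -> X * Z <> Y * W -> X / Y * (Z / W) <> 1.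
Proof. intros HY HW H E. apply H. field_simplify in E; auto. unfold Rdiv in E.
  apply (f_equal (fun q => q * (Y * W))) in E. rewrite Rmult_1_l in E. rewrite <- E. field. auto. Qed.

Lemma DenseS0 (S : pt -> Prop) s t : MC S -> S (0,0) -> S (1,0) -> S (0,1) -> S (s,t) ->
  s <> 0 -> t <> 0 -> s + t <> 1 -> s <> 1 -> t <> 1 -> s + t <> 0 -> dense S.
Proof.
intros HM HO HA HB HD Hs Ht Hr Hs1 Ht1 Hst.
assert (HWA : S (s / (s + t), t / (s + t))).
{ apply (MCc S 0 0 s t 1 0 0 1 _ _ (1 / (s + t)) (t / (s + t)) HM HO HD HA HB).
  - replace ((s - 0) * (1 - 0) - (t - 0) * (0 - 1)) with (s + t) by ring. auto.
  - field; auto.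
  - field; auto.
  - field; auto.
  - field; auto. }
assert (HWB : S (0, t / (1 - s))).
{ apply (MCc S 1 0 s t 0 0 0 1 _ _ (1 / (1 - s)) (t / (1 - s)) HM HA HD HO HB).
  - replace ((s - 1) * (1 - 0) - (t - 0) * (0 - 0)) with (s - 1) by ring. lra.
  - field; lra.
  - field; lra.
  - ring.
  - field; lra. }
assert (HWC : S (s / (1 - t), 0)).
{ apply (MCc S 0 1 s t 0 0 1 0 _ _ (1 / (1 - t)) (s / (1 - t)) HM HB HD HO HA).
  - replace ((s - 0) * (0 - 0) - (t - 1) * (1 - 0)) with (1 - t) by ring. lra.
  - field; lra.
  - field; lra.
  - field; lra.
  - ring. }
set (r := 1 - s - t).
destruct (Rlt_or_le r 0) as [Hr0|Hr0];
destruct (Rlt_or_le s 0) as [Hs0|Hs0];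
destruct (Rlt_or_le t 0) as [Ht0|Ht0].
- exfalso. unfold r in Hr0. lra.
- (* r<0, s<0, t>0 : case 7, W = B *)
  apply (QuadLemma S 0 1 0 0 1 0 (r / (1 - s)) (s / (s + t)) HM HB HO HA).
  + replace (0 + r / (1 - s) * (0 - 0), 1 + r / (1 - s) * (0 - 1)) with (0, t / (1 - s)) by (unfold r; f_equal; field; lra). auto.
  + replace (0 + s / (s + t) * (1 - 0), 1 + s / (s + t) * (0 - 1)) with (s / (s + t), t / (s + t)) by (f_equal; field; auto). auto.
  + unfold Rdiv. apply Rmult_neg_pos; [lra | apply Rinv_0_lt_compat; lra].
  + assert (0 < s + t) by (unfold r in Hr0; lra). unfold Rdiv. apply Rmult_neg_pos; [lra | apply Rinv_0_lt_compat; lra].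
  + lra.
  + apply lm_ne; try lra; unfold r; intro E; apply Ht; nra.
- (* r<0, s>=0, t<0 : W = A *)
  assert (0 < s + t) by (unfold r in Hr0; lra).
  apply (QuadLemma S 1 0 0 0 0 1 (r / (1 - t)) (t / (s + t)) HM HA HO HB).
  + replace (1 + r / (1 - t) * (0 - 1), 0 + r / (1 - t) * (0 - 0)) with (s / (1 - t), 0) by (unfold r; f_equal; field; lra). auto.
  + replace (1 + t / (s + t) * (0 - 1), 0 + t / (s + t) * (1 - 0)) with (s / (s + t), t / (s + t)) by (f_equal; field; lra). auto.
  + unfold Rdiv. apply Rmult_neg_pos; [lra | apply Rinv_0_lt_compat; lra].
  + unfold Rdiv. apply Rmult_neg_pos; [lra | apply Rinv_0_lt_compat; lra].
  + lra.
  + apply lm_ne; try lra; unfold r; intro E; apply Hs; nra.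
- (* r<0, s>=0, t>=0 : W = W_A *)
  assert (Hs' : 0 < s) by lra. assert (Ht' : 0 < t) by lra.
  apply (QuadLemma S (s / (s + t)) (t / (s + t)) 1 0 0 0 (- s / t) r HM HWA HA HO).
  + replace (s / (s + t) + - s / t * (1 - s / (s + t)), t / (s + t) + - s / t * (0 - t / (s + t))) with (0, 1) by (f_equal; field; lra). auto.
  + replace (s / (s + t) + r * (0 - s / (s + t)), t / (s + t) + r * (0 - t / (s + t))) with (s, t) by (unfold r; f_equal; field; lra). auto.
  + unfold Rdiv. apply Rmult_neg_pos; [lra | apply Rinv_0_lt_compat; lra].
  + lra.
  + replace ((1 - s / (s + t)) * (0 - t / (s + t)) - (0 - t / (s + t)) * (0 - s / (s + t))) with (- (t / (s + t))) by (field; lra).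
    assert (0 < t / (s + t)) by (apply Rdiv_lt_0_compat; lra). lra.
  + intro E. assert (E2 : (s - 1) * (s + t) = 0).
    { replace (- s / t * r) with ((- s * r) / t) in E by (field; lra).
      apply (f_equal (fun q => q * t)) in E. replace (- s * r / t * t) with (- s * r) in E by (field; lra).
      unfold r in E. nra. }
    apply Rmult_integral in E2. destruct E2; lra.
- (* r>=0, s<0, t<0 : W = O *)
  apply (QuadLemma S 0 0 1 0 0 1 (s / (1 - t)) (t / (1 - s)) HM HO HA HB).
  + replace (0 + s / (1 - t) * (1 - 0), 0 + s / (1 - t) * (0 - 0)) with (s / (1 - t), 0) by (f_equal; field; lra). auto.
  + replace (0 + t / (1 - s) * (0 - 0), 0 + t / (1 - s) * (1 - 0)) with (0, t / (1 - s)) by (f_equal; field; lra). auto.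
  + unfold Rdiv. apply Rmult_neg_pos; [lra | apply Rinv_0_lt_compat; lra].
  + unfold Rdiv. apply Rmult_neg_pos; [lra | apply Rinv_0_lt_compat; lra].
  + lra.
  + apply lm_ne; try lra; intro E; apply Hr; nra.
- (* r>=0, s<0, t>=0 : W = W_B *)
  assert (Hr' : 0 < r) by (unfold r in *; lra). assert (Ht' : 0 < t) by lra.
  apply (QuadLemma S 0 (t / (1 - s)) 0 0 1 0 (- r / t) s HM HWB HO HA).
  + replace (0 + - r / t * (0 - 0), t / (1 - s) + - r / t * (0 - t / (1 - s))) with (0, 1) by (unfold r; f_equal; field; lra). auto.
  + replace (0 + s * (1 - 0), t / (1 - s) + s * (0 - t / (1 - s))) with (s, t) by (f_equal; field; lra). auto.
  + unfold Rdiv. replace (- r) with (- r) by ring. apply Rmult_neg_pos; [lra | apply Rinv_0_lt_compat; lra].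
  + lra.
  + replace ((0 - 0) * (0 - t / (1 - s)) - (0 - t / (1 - s)) * (1 - 0)) with (t / (1 - s)) by ring.
    assert (0 < t / (1 - s)) by (apply Rdiv_lt_0_compat; lra). lra.
  + intro E. assert (E2 : (s - 1) * (s + t) = 0).
    { replace (- r / t * s) with ((- r * s) / t) in E by (field; lra).
      apply (f_equal (fun q => q * t)) in E. replace (- r * s / t * t) with (- r * s) in E by (field; lra).
      unfold r in E. nra. }
    apply Rmult_integral in E2. destruct E2; lra.
- (* r>=0, s>=0, t<0 : W = W_C *)
  assert (Hr' : 0 < r) by (unfold r in *; lra). assert (Hs' : 0 < s) by lra.
  apply (QuadLemma S (s / (1 - t)) 0 0 0 0 1 (- r / s) t HM HWC HO HB).
  + replace (s / (1 - t) + - r / s * (0 - s / (1 - t)), 0 + - r / s * (0 - 0)) with (1, 0) by (unfold r; f_equal; field; lra). auto.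
  + replace (s / (1 - t) + t * (0 - s / (1 - t)), 0 + t * (1 - 0)) with (s, t) by (f_equal; field; lra). auto.
  + unfold Rdiv. apply Rmult_neg_pos; [lra | apply Rinv_0_lt_compat; lra].
  + lra.
  + replace ((0 - s / (1 - t)) * (1 - 0) - (0 - 0) * (0 - s / (1 - t))) with (- (s / (1 - t))) by ring.
    assert (0 < s / (1 - t)) by (apply Rdiv_lt_0_compat; lra). lra.
  + intro E. assert (E2 : (t - 1) * (s + t) = 0).
    { replace (- r / s * t) with ((- r * t) / s) in E by (field; lra).
      apply (f_equal (fun q => q * s)) in E. replace (- r * t / s * s) with (- r * t) in E by (field; lra).
      unfold r in E. nra. }
    apply Rmult_integral in E2. destruct E2; lra.
- (* all positive : W = D *)
  assert (Hr' : 0 < r) by (unfold r in *; lra). assert (Hs' : 0 < s) by lra. assert (Ht' : 0 < t) by lra.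
  assert (H1s : 0 < 1 - s) by (unfold r in *; lra).
  apply (QuadLemma S s t 0 0 1 0 (- r / (s + t)) (- s / (1 - s)) HM HD HO HA).
  + replace (s + - r / (s + t) * (0 - s), t + - r / (s + t) * (0 - t)) with (s / (s + t), t / (s + t)) by (unfold r; f_equal; field; lra). auto.
  + replace (s + - s / (1 - s) * (1 - s), t + - s / (1 - s) * (0 - t)) with (0, t / (1 - s)) by (f_equal; field; lra). auto.
  + unfold Rdiv. apply Rmult_neg_pos; [lra | apply Rinv_0_lt_compat; lra].
  + unfold Rdiv. apply Rmult_neg_pos; [lra | apply Rinv_0_lt_compat; lra].
  + replace ((0 - s) * (0 - t) - (0 - t) * (1 - s)) with t by ring. lra.
  + apply lm_ne; try lra; unfold r; intro E; apply Ht; nra.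
Qed.

Set Bullet Behavior "Strict Subproofs".

Lemma neq_of_mul X Y : X = Y * 1 -> X <> 0 -> Y <> 0.
Proof. intros E H F. apply H. rewrite E, F. ring. Qed.

Theorem Density (S : pt -> Prop) c1 c2 c3 c4 : MC S -> S c1 -> S c2 -> S c3 -> S c4 ->
  general_position c1 c2 c3 c4 -> dense S.
Proof.
intros HM H1 H2 H3 H4 [G1 [G2 [G3 [G4 [G5 [G6 G7]]]]]].
destruct c1 as [a1 a2], c2 as [b1 b2], c3 as [e1 e2], c4 as [f1 f2].
unfold collinear, parallel, line_through, cross, psub in *; simpl in *.
set (u := (b1 - a1, b2 - a2)). set (v := (e1 - a1, e2 - a2)).
set (c := (b1 - a1) * (e2 - a2) - (b2 - a2) * (e1 - a1)) in *.
assert (Hc : c <> 0) by (intro E; apply G1; exact E).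
assert (Huv : cross u v <> 0) by (unfold cross, u, v; simpl; exact Hc).
set (S0 := fun z => S (phi (a1,a2) u v z)).
assert (HM0 : MC S0) by (apply MC_transport; auto).
set (s := ((f1 - a1) * (e2 - a2) - (f2 - a2) * (e1 - a1)) / c).
set (t := ((b1 - a1) * (f2 - a2) - (b2 - a2) * (f1 - a1)) / c).
assert (HO : S0 (0,0)) by (unfold S0, phi, u, v; simpl; replace (a1 + 0 * (b1 - a1) + 0 * (e1 - a1), a2 + 0 * (b2 - a2) + 0 * (e2 - a2)) with (a1, a2) by (f_equal; ring); auto).
assert (HA : S0 (1,0)) by (unfold S0, phi, u, v; simpl; replace (a1 + 1 * (b1 - a1) + 0 * (e1 - a1), a2 + 1 * (b2 - a2) + 0 * (e2 - a2)) with (b1, b2) by (f_equal; ring); auto).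
assert (HB : S0 (0,1)) by (unfold S0, phi, u, v; simpl; replace (a1 + 0 * (b1 - a1) + 1 * (e1 - a1), a2 + 0 * (b2 - a2) + 1 * (e2 - a2)) with (e1, e2) by (f_equal; ring); auto).
assert (HD : S0 (s,t)).
{ unfold S0, phi, u, v; simpl. replace (a1 + s * (b1 - a1) + t * (e1 - a1), a2 + s * (b2 - a2) + t * (e2 - a2)) with (f1, f2); auto.
  unfold s, t, c. f_equal; field; exact Hc. }
assert (Ds : dense S0).
{ apply (DenseS0 S0 s t HM0 HO HA HB HD).
    intro E. apply G3. replace ((e1 - a1) * (f2 - a2) - (e2 - a2) * (f1 - a1)) with (- s * c) by (unfold s; field; exact Hc). rewrite E. ring.
  - intro E. apply G2. replace ((b1 - a1) * (f2 - a2) - (b2 - a2) * (f1 - a1)) with (t * c) by (unfold t; field; exact Hc). rewrite E. ring.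
  - intro E. apply G4. replace ((e1 - b1) * (f2 - b2) - (e2 - b2) * (f1 - b1)) with (- (s + t - 1) * c) by (unfold s, t, c; field; exact Hc). rewrite E. ring.
  - intro E. apply G6. replace ((e1 - a1) * (f2 - b2) - (e2 - a2) * (f1 - b1)) with (- (s - 1) * c) by (unfold s, t, c; field; exact Hc). rewrite E. ring.
  - intro E. apply G5. replace ((b1 - a1) * (f2 - e2) - (b2 - a2) * (f1 - e1)) with ((t - 1) * c) by (unfold s, t, c; field; exact Hc). rewrite E. ring.
  - intro E. apply G7. replace ((f1 - a1) * (e2 - b2) - (f2 - a2) * (e1 - b1)) with ((s + t) * c) by (unfold s, t, c; field; exact Hc). rewrite E. ring. }
apply dense_Approx. apply (dense_transport S (a1,a2) u v Huv). intro z. exact (Ds z).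
Qed.

Set Bullet Behavior "Strict Subproofs".


Lemma stage_S_fst C c1 c2 c3 c4 k x :
  fst (stage C c1 c2 c3 c4 (S k)) x <->
  (fst (stage C c1 c2 c3 c4 k) x
   \/ (exists l1 l2,
         (snd (stage C c1 c2 c3 c4 k) l1 \/ exists b1 b2, fst (stage C c1 c2 c3 c4 k) b1 /\ fst (stage C c1 c2 c3 c4 k) b2 /\ b1 <> b2 /\ l1 = line_through b1 b2) /\
         (snd (stage C c1 c2 c3 c4 k) l2 \/ exists b1 b2, fst (stage C c1 c2 c3 c4 k) b1 /\ fst (stage C c1 c2 c3 c4 k) b2 /\ b1 <> b2 /\ l2 = line_through b1 b2) /\
         ~ parallel l1 l2 /\ on_line l1 x /\ on_line l2 x)
   \/ (exists l g,
         (snd (stage C c1 c2 c3 c4 k) l \/ exists b1 b2, fst (stage C c1 c2 c3 c4 k) b1 /\ fst (stage C c1 c2 c3 c4 k) b2 /\ b1 <> b2 /\ l = line_through b1 b2) /\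
         In g (ccurves C) /\ isolated_inter l g x)).
Proof. simpl. destruct (stage C c1 c2 c3 c4 k) as [Sk Lk]. simpl. tauto. Qed.

Lemma stage_S_snd C c1 c2 c3 c4 k l :
  snd (stage C c1 c2 c3 c4 (S k)) l <->
  (snd (stage C c1 c2 c3 c4 k) l \/ exists b1 b2, fst (stage C c1 c2 c3 c4 k) b1 /\ fst (stage C c1 c2 c3 c4 k) b2 /\ b1 <> b2 /\ l = line_through b1 b2).
Proof. simpl. destruct (stage C c1 c2 c3 c4 k) as [Sk Lk]. simpl. tauto. Qed.

Lemma stage_mono C c1 c2 c3 c4 k m : (k <= m)%nat ->
  (forall x, fst (stage C c1 c2 c3 c4 k) x -> fst (stage C c1 c2 c3 c4 m) x) /\
  (forall l, snd (stage C c1 c2 c3 c4 k) l -> snd (stage C c1 c2 c3 c4 m) l).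
Proof.
intro H. induction H as [|m H [IH1 IH2]].
- split; auto.
- split.
  + intros x Hx. apply stage_S_fst. left. auto.
  + intros l Hl. apply stage_S_snd. left. auto.
Qed.

Lemma parallel_iso_false l b1 b2 p : is_line l -> b1 <> b2 ->
  parallel (line_through b1 b2) l -> isolated_inter (line_through b1 b2) (on_line l) p -> False.
Proof.
destruct l as [[p1 p2] [d1 d2]], b1 as [x1 y1], b2 as [x2 y2], p as [q1 q2].
unfold is_line, parallel, isolated_inter, on_line, line_through, cross, psub, padd, pscale, dist2; simpl.
intros Hd Hb Hpar [[t0 Ht0] [[s0 Hs0] [eps [Heps Hiso]]]].
set (e1 := x2 - x1) in *. set (e2 := y2 - y1) in *.
assert (HN : 0 < e1 * e1 + e2 * e2).
{ destruct (Req_dec e1 0) as [E1|E1]; [destruct (Req_dec e2 0) as [E2|E2]|].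
  - exfalso. apply Hb. unfold e1, e2 in *. f_equal; lra.
  - assert (0 < e2 * e2) by nra. nra.
  - assert (0 < e1 * e1) by nra. nra. }
assert (HD : 0 < d1 * d1 + d2 * d2).
{ destruct (Req_dec d1 0) as [E1|E1]; [destruct (Req_dec d2 0) as [E2|E2]|].
  - exfalso. apply Hd. subst. reflexivity.
  - assert (0 < d2 * d2) by nra. nra.
  - assert (0 < d1 * d1) by nra. nra. }
set (N := e1 * e1 + e2 * e2). assert (HN' : 0 < N) by (unfold N; lra).
set (h := eps / (N + 1)).
assert (Hh : 0 < h) by (unfold h; apply Rdiv_lt_0_compat; lra).
set (la := (e1 * d1 + e2 * d2) / (d1 * d1 + d2 * d2)).
assert (P1 : d2 * (e1 * d2 - e2 * d1) = 0) by (rewrite Hpar; ring).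
assert (P2 : d1 * (e1 * d2 - e2 * d1) = 0) by (rewrite Hpar; ring).
assert (Ee1 : e1 = la * d1).
{ unfold la. apply Rmult_eq_reg_r with (d1*d1+d2*d2); [|lra].
  replace ((e1 * d1 + e2 * d2) / (d1 * d1 + d2 * d2) * d1 * (d1 * d1 + d2 * d2)) with ((e1*d1+e2*d2)*d1) by (field; lra).
  nra. }
assert (Ee2 : e2 = la * d2).
{ unfold la. apply Rmult_eq_reg_r with (d1*d1+d2*d2); [|lra].
  replace ((e1 * d1 + e2 * d2) / (d1 * d1 + d2 * d2) * d2 * (d1 * d1 + d2 * d2)) with ((e1*d1+e2*d2)*d2) by (field; lra).
  nra. }
injection Ht0; injection Hs0; intros F1 F2 F3 F4.
specialize (Hiso (q1 + h * e1, q2 + h * e2)).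
assert (K : (q1 + h * e1, q2 + h * e2) = (q1, q2)).
{ apply Hiso.
  - exists (t0 + h). f_equal; rewrite ?F4, ?F3; ring.
  - exists (s0 + h * la). rewrite F2, F1, Ee1, Ee2. f_equal; ring.
  - match goal with |- ?L < ?R => assert (EL : L = h * h * N) by (cbn [fst snd]; unfold N; ring);
      assert (ER : R = eps ^ 2) by (cbn; ring); rewrite EL, ER end.
    unfold h. replace (eps / (N + 1) * (eps / (N + 1)) * N) with (eps ^ 2 * (N / ((N + 1) * (N + 1)))) by (field; lra).
    assert (N / ((N + 1) * (N + 1)) < 1).
    { assert (HNN : 0 < (N + 1) * (N + 1)) by nra.
      apply Rmult_lt_reg_r with ((N + 1) * (N + 1)); [exact HNN|]. unfold Rdiv. rewrite Rmult_assoc, Rinv_l by (apply Rgt_not_eq; exact HNN).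
      rewrite Rmult_1_r, Rmult_1_l. nra. }
    assert (0 < eps ^ 2) by (apply pow_lt; lra).
    apply (Rlt_le_trans _ (eps ^ 2 * 1)); [apply Rmult_lt_compat_l; auto | lra]. }
injection K; intros K1 K2.
assert (h * e1 = 0) by lra. assert (h * e2 = 0) by lra.
assert (e1 = 0) by (apply (Rmult_eq_reg_l h); lra).
assert (e2 = 0) by (apply (Rmult_eq_reg_l h); lra).
unfold N in HN. nra.
Qed.

Lemma stage0_pts C c1 c2 c3 c4 x : In x (cpoints C) \/ x = c1 \/ x = c2 \/ x = c3 \/ x = c4 ->
  fst (stage C c1 c2 c3 c4 0) x.
Proof. simpl. auto. Qed.

Lemma stage0_lines C c1 c2 c3 c4 l : In l (clines C) -> snd (stage C c1 c2 c3 c4 0) l.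
Proof. simpl. auto. Qed.

Lemma DirA C c1 c2 c3 c4 : Forall is_line (clines C) -> general_position c1 c2 c3 c4 ->
  admissible C (fun x => exists k, fst (stage C c1 c2 c3 c4 k) x).
Proof.
intros HL Hgp.
set (Sinf := fun x => exists k, fst (stage C c1 c2 c3 c4 k) x).
assert (up : forall k m x, (k <= m)%nat -> fst (stage C c1 c2 c3 c4 k) x -> fst (stage C c1 c2 c3 c4 m) x).
{ intros k m x H. apply (stage_mono C c1 c2 c3 c4 k m H). }
assert (upl : forall k m l, (k <= m)%nat -> snd (stage C c1 c2 c3 c4 k) l -> snd (stage C c1 c2 c3 c4 m) l).
{ intros k m l H. apply (stage_mono C c1 c2 c3 c4 k m H). }
assert (HMC : MC Sinf).
{ intros b1 b2 b3 b4 p [k1 H1] [k2 H2] [k3 H3] [k4 H4] N12 N34 NP L1 L2.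
  set (K := Nat.max (Nat.max k1 k2) (Nat.max k3 k4)).
  exists (S K). apply stage_S_fst. right. left.
  exists (line_through b1 b2), (line_through b3 b4). split; [|split; [|split; [|split]]]; auto.
  - right. exists b1, b2. repeat split; auto; [apply (up k1) | apply (up k2)]; auto; unfold K; lia.
  - right. exists b3, b4. repeat split; auto; [apply (up k3) | apply (up k4)]; auto; unfold K; lia. }
assert (Hc : forall c, c = c1 \/ c = c2 \/ c = c3 \/ c = c4 -> Sinf c).
{ intros c Hc. exists 0%nat. apply stage0_pts. right. exact Hc. }
split; [|split; [|split]].
- apply (Density Sinf c1 c2 c3 c4 HMC); auto.
- intros a Ha. exists 0%nat. apply stage0_pts. left. auto.
- exact HMC.
- intros b1 b2 p [k1 H1] [k2 H2] N12 [[l [Hl Hiso]] | [g [Hg Hiso]]].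
  + set (K := Nat.max k1 k2).
    assert (G1 : fst (stage C c1 c2 c3 c4 K) b1) by (apply (up k1); auto; unfold K; lia).
    assert (G2 : fst (stage C c1 c2 c3 c4 K) b2) by (apply (up k2); auto; unfold K; lia).
    destruct (Req_dec (cross (snd (line_through b1 b2)) (snd l)) 0) as [Hp|Hp].
    * exfalso. apply (parallel_iso_false l b1 b2 p); auto.
      rewrite Forall_forall in HL. apply HL; auto.
    * exists (S K). apply stage_S_fst. right. left.
      exists (line_through b1 b2), l. destruct Hiso as [Hon [Hon2 _]].
      split; [|split; [|split; [|split]]]; auto.
      -- right. exists b1, b2. repeat split; auto.
      -- left. apply (upl 0%nat); [lia|]. apply stage0_lines; auto.
  + set (K := Nat.max k1 k2).
    assert (G1 : fst (stage C c1 c2 c3 c4 K) b1) by (apply (up k1); auto; unfold K; lia).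
    assert (G2 : fst (stage C c1 c2 c3 c4 K) b2) by (apply (up k2); auto; unfold K; lia).
    exists (S K). apply stage_S_fst. right. right.
    exists (line_through b1 b2), g. split; [|split]; auto.
    right. exists b1, b2. repeat split; auto.
Qed.

Set Bullet Behavior "Strict Subproofs".

Lemma dense_close (Sg : pt -> Prop) x d : dense Sg -> 0 < d -> exists y, Sg y /\ close d x y.
Proof. intros H Hd. destruct (H x d Hd) as [y [Hy Hxy]]. exists y. split; auto. apply dist2_close; auto. Qed.

Lemma close_refl d x : 0 < d -> close d x x.
Proof. intros. unfold close. rewrite !Rminus_diag_eq by reflexivity. rewrite Rabs_R0. lra. Qed.

Lemma GPexists (Sg : pt -> Prop) : dense Sg -> exists c1 c2 c3 c4, Sg c1 /\ Sg c2 /\ Sg c3 /\ Sg c4 /\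
  general_position c1 c2 c3 c4.
Proof.
intro HD.
set (T1 := (0,0) : pt). set (T2 := (1,0) : pt). set (T3 := (0,1) : pt). set (T4 := (2,3) : pt).
assert (Hdn : forall a b c d, Dn a b c d <> 0 -> exists de, 0 < de /\ forall a' b' c' d', close de a a' -> close de b b' -> close de c c' -> close de d d' -> Dn a' b' c' d' <> 0).
{ intros a b c d H. destruct (cont_meet a b c d H 1 ltac:(lra)) as [de [Hde Hc]]. exists de. split; auto.
  intros. apply (Hc a' b' c' d'); auto. }
destruct (Hdn T1 T2 T1 T3) as [d1 [Hd1 K1]]. { unfold Dn, cross, psub, T1, T2, T3; simpl. lra. }
destruct (Hdn T1 T2 T1 T4) as [d2 [Hd2 K2]]. { unfold Dn, cross, psub, T1, T2, T4; simpl. lra. }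
destruct (Hdn T1 T3 T1 T4) as [d3 [Hd3 K3]]. { unfold Dn, cross, psub, T1, T3, T4; simpl. lra. }
destruct (Hdn T2 T3 T2 T4) as [d4 [Hd4 K4]]. { unfold Dn, cross, psub, T2, T3, T4; simpl. lra. }
destruct (Hdn T1 T2 T3 T4) as [d5 [Hd5 K5]]. { unfold Dn, cross, psub, T1, T2, T3, T4; simpl. lra. }
destruct (Hdn T1 T3 T2 T4) as [d6 [Hd6 K6]]. { unfold Dn, cross, psub, T1, T2, T3, T4; simpl. lra. }
destruct (Hdn T1 T4 T2 T3) as [d7 [Hd7 K7]]. { unfold Dn, cross, psub, T1, T2, T3, T4; simpl. lra. }
set (de := Rmin d1 (Rmin d2 (Rmin d3 (Rmin d4 (Rmin d5 (Rmin d6 d7)))))).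
assert (Hde : 0 < de) by (unfold de; repeat apply Rmin_pos; auto).
assert (L1 : de <= d1) by (unfold de; apply Rmin_l).
assert (L2 : de <= d2) by (unfold de; eapply Rle_trans; [apply Rmin_r|apply Rmin_l]).
assert (L3 : de <= d3) by (unfold de; eapply Rle_trans; [apply Rmin_r|]; eapply Rle_trans; [apply Rmin_r|apply Rmin_l]).
assert (L4 : de <= d4) by (unfold de; do 2 (eapply Rle_trans; [apply Rmin_r|]); eapply Rle_trans; [apply Rmin_r|apply Rmin_l]).
assert (L5 : de <= d5) by (unfold de; do 3 (eapply Rle_trans; [apply Rmin_r|]); eapply Rle_trans; [apply Rmin_r|apply Rmin_l]).
assert (L6 : de <= d6) by (unfold de; do 4 (eapply Rle_trans; [apply Rmin_r|]); eapply Rle_trans; [apply Rmin_r|apply Rmin_l]).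
assert (L7 : de <= d7) by (unfold de; do 5 (eapply Rle_trans; [apply Rmin_r|]); apply Rmin_r).
destruct (dense_close Sg T1 de HD Hde) as [c1 [S1 C1]].
destruct (dense_close Sg T2 de HD Hde) as [c2 [S2 C2]].
destruct (dense_close Sg T3 de HD Hde) as [c3 [S3 C3]].
destruct (dense_close Sg T4 de HD Hde) as [c4 [S4 C4]].
exists c1, c2, c3, c4. repeat split; auto.
- apply K1; eapply close_mono; eauto.
- apply K2; eapply close_mono; eauto.
- apply K3; eapply close_mono; eauto.
- apply K4; eapply close_mono; eauto.
- apply K5; eapply close_mono; eauto.
- apply K6; eapply close_mono; eauto.
- apply K7; eapply close_mono; eauto.
Qed.

Lemma LineRealize C (Sg : pt -> Prop) l : admissible C Sg -> In l (clines C) -> is_line l ->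
  exists m1 m2, Sg m1 /\ Sg m2 /\ m1 <> m2 /\
   (forall x, on_line l x <-> on_line (line_through m1 m2) x) /\
   exists mu, mu <> 0 /\ psub m2 m1 = pscale mu (snd l).
Proof.
intros [HD [_ [_ H4]]] Hl Hil.
destruct l as [[p1 p2] [d1 d2]] eqn:El. unfold is_line in Hil; simpl in Hil.
assert (HN : 0 < d1 * d1 + d2 * d2).
{ destruct (Req_dec d1 0) as [E1|E1]; [destruct (Req_dec d2 0) as [E2|E2]|].
  - exfalso. apply Hil. subst. reflexivity.
  - assert (0 < d2 * d2) by nra. nra.
  - assert (0 < d1 * d1) by nra. nra. }
set (P0 := (p1, p2) : pt). set (Pd := (p1 + d1, p2 + d2) : pt).
assert (Lq : forall x, on_line l x <-> on_line (line_through P0 Pd) x).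
{ intros [x1 x2]. rewrite El. unfold on_line, line_through, padd, pscale, psub, P0, Pd; simpl. split.
  - intros [t Ht]. exists t. injection Ht; intros; subst. f_equal; ring.
  - intros [t Ht]. exists t. injection Ht; intros; subst. f_equal; ring. }
set (U := (p1 - d2, p2 + d1) : pt). set (V1 := (p1 + d2, p2 - d1) : pt). set (V2 := (p1 + d1 + d2, p2 + d2 - d1) : pt).
assert (D1 : Dn U V1 P0 Pd <> 0) by (unfold Dn, cross, psub, U, V1, P0, Pd; simpl; nra).
assert (D2 : Dn U V2 P0 Pd <> 0) by (unfold Dn, cross, psub, U, V2, P0, Pd; simpl; nra).
assert (M1e : meetpt U V1 P0 Pd = (p1, p2)).
{ unfold meetpt, tpar, Dn, cross, padd, pscale, psub, U, V1, P0, Pd; simpl. f_equal; field; nra. }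
assert (M2e : meetpt U V2 P0 Pd = (p1 + d1 / 2, p2 + d2 / 2)).
{ unfold meetpt, tpar, Dn, cross, padd, pscale, psub, U, V2, P0, Pd; simpl. f_equal; field; nra. }
assert (Hs : 0 < Rabs d1 + Rabs d2).
{ destruct (Req_dec d1 0) as [E1|E1].
  - assert (d2 <> 0) by (intro; subst; lra). pose proof (Rabs_pos_lt d2 H). pose proof (Rabs_pos d1). lra.
  - pose proof (Rabs_pos_lt d1 E1). pose proof (Rabs_pos d2). lra. }
set (e := (Rabs d1 + Rabs d2) / 10).
assert (He : 0 < e) by (unfold e; lra).
destruct (cont_meet U V1 P0 Pd D1 e He) as [de1 [Hde1 K1]].
destruct (cont_meet U V2 P0 Pd D2 e He) as [de2 [Hde2 K2]].
set (de := Rmin de1 de2). assert (Hde : 0 < de) by (apply Rmin_pos; auto).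
pose proof (Rmin_l de1 de2) as Lm1. pose proof (Rmin_r de1 de2) as Lm2.
destruct (dense_close Sg U de HD Hde) as [u [Su Cu]].
destruct (dense_close Sg V1 de HD Hde) as [v1 [Sv1 Cv1]].
destruct (dense_close Sg V2 de HD Hde) as [v2 [Sv2 Cv2]].
assert (CP : forall d, 0 < d -> close d P0 P0) by (intros; apply close_refl; auto).
assert (CQ : forall d, 0 < d -> close d Pd Pd) by (intros; apply close_refl; auto).
destruct (K1 u v1 P0 Pd (close_mono _ _ _ _ Lm1 Cu) (close_mono _ _ _ _ Lm1 Cv1) (CP de1 Hde1) (CQ de1 Hde1)) as [N1 [A1 B1]].
destruct (K2 u v2 P0 Pd (close_mono _ _ _ _ Lm2 Cu) (close_mono _ _ _ _ Lm2 Cv2) (CP de2 Hde2) (CQ de2 Hde2)) as [N2 [A2 B2]].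
set (M1 := meetpt u v1 P0 Pd). set (M2 := meetpt u v2 P0 Pd).
assert (On1 : on_line l M1) by (apply Lq; apply meet_on2; auto).
assert (On2 : on_line l M2) by (apply Lq; apply meet_on2; auto).
assert (Iso : forall v, Dn u v P0 Pd <> 0 -> isolated_inter (line_through u v) (on_line l) (meetpt u v P0 Pd)).
{ intros v Hv. split; [apply meet_on1|]. split; [apply Lq; apply meet_on2; auto|].
  exists 1. split; [lra|]. intros q Hq1 Hq2 _. apply on_both_meet; auto. apply Lq; auto. }
assert (SM1 : Sg M1).
{ apply (H4 u v1); auto. eapply Dn_neq12; eauto. left. exists l. split; [try rewrite El; auto | apply Iso; auto]. }
assert (SM2 : Sg M2).
{ apply (H4 u v2); auto. eapply Dn_neq12; eauto. left. exists l. split; [try rewrite El; auto | apply Iso; auto]. }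
rewrite M1e in A1, B1. rewrite M2e in A2, B2. cbn [fst snd] in A1, B1, A2, B2.
fold M1 in A1, B1. fold M2 in A2, B2.
rewrite El in On1, On2. unfold on_line, padd, pscale in On1, On2; simpl in On1, On2.
destruct On1 as [s1 Es1]. destruct On2 as [s2 Es2].
assert (Hs12 : s1 <> s2).
{ intro E. subst s2.
  rewrite Es1 in A1, B1. cbn [fst snd] in A1, B1.
  rewrite Es2 in A2, B2. cbn [fst snd] in A2, B2.
  apply Rabs_def2 in A1. apply Rabs_def2 in B1. apply Rabs_def2 in A2. apply Rabs_def2 in B2.
  assert (Rabs d1 <= 4 * e).
  { unfold Rabs. destruct (Rcase_abs d1); lra. }
  assert (Rabs d2 <= 4 * e).
  { unfold Rabs. destruct (Rcase_abs d2); lra. }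
  unfold e in *. lra. }
exists M1, M2. split; [auto|]. split; [auto|]. split.
{ intro E. apply Hs12. rewrite Es1, Es2 in E. injection E; intros G1 G2.
  destruct (Req_dec d1 0) as [Z1|Z1].
  - assert (d2 <> 0) by (intro; subst; lra). apply (Rmult_eq_reg_r d2); auto. lra.
  - apply (Rmult_eq_reg_r d1); auto. lra. }
split.
- intros [x1 x2]. try rewrite El. unfold on_line, line_through, padd, pscale, psub. rewrite Es1, Es2. simpl. split.
  + intros [t Ht]. exists ((t - s1) / (s2 - s1)). injection Ht; intros; subst. f_equal; field; intro; apply Hs12; lra.
  + intros [t Ht]. exists (s1 + t * (s2 - s1)). injection Ht; intros; subst. f_equal; ring.
- exists (s2 - s1). split; [intro; apply Hs12; lra|]. rewrite Es1, Es2. unfold psub, pscale; simpl. f_equal; ring.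
Qed.

Set Bullet Behavior "Strict Subproofs".

Definition GoodL (Sg : pt -> Prop) (l : line) : Prop :=
  exists m1 m2, Sg m1 /\ Sg m2 /\ m1 <> m2 /\
   (forall x, on_line l x <-> on_line (line_through m1 m2) x) /\
   exists mu, mu <> 0 /\ psub m2 m1 = pscale mu (snd l).

Lemma GoodL_new Sg b1 b2 : Sg b1 -> Sg b2 -> b1 <> b2 -> GoodL Sg (line_through b1 b2).
Proof.
intros. exists b1, b2. repeat split; auto. exists 1. split; [lra|].
destruct b1, b2. unfold psub, pscale, line_through; simpl. f_equal; ring.
Qed.

Lemma par_transfer m1 m2 m3 m4 l1 l2 mu1 mu2 : mu1 <> 0 -> mu2 <> 0 ->
  psub m2 m1 = pscale mu1 (snd l1) -> psub m4 m3 = pscale mu2 (snd l2) ->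
  ~ parallel l1 l2 -> ~ parallel (line_through m1 m2) (line_through m3 m4).
Proof.
intros H1 H2 E1 E2 NP P. apply NP. unfold parallel, line_through in *. simpl in P.
rewrite E1, E2 in P. destruct l1 as [x1 [d1 d2]], l2 as [x2 [e1 e2]].
unfold cross, pscale in *; simpl in *.
assert (E : mu1 * mu2 * (d1 * e2 - d2 * e1) = 0) by (rewrite <- P; ring).
apply Rmult_integral in E. destruct E as [E|E]; auto.
apply Rmult_integral in E. destruct E; contradiction.
Qed.

Lemma iso_transfer l l' g x : (forall y, on_line l y <-> on_line l' y) ->
  isolated_inter l g x -> isolated_inter l' g x.
Proof.
intros H [H1 [H2 [eps [He H3]]]]. split; [apply H; auto|]. split; auto.
exists eps. split; auto. intros q Hq1 Hq2 Hq3. apply H3; auto. apply H; auto.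
Qed.

Lemma stage_in C Sg c1 c2 c3 c4 : admissible C Sg -> Forall is_line (clines C) ->
  Sg c1 -> Sg c2 -> Sg c3 -> Sg c4 -> forall k,
  (forall x, fst (stage C c1 c2 c3 c4 k) x -> Sg x) /\
  (forall l, snd (stage C c1 c2 c3 c4 k) l -> GoodL Sg l).
Proof.
intros Adm HL H1 H2 H3 H4 k. pose proof Adm as [HD [HP [H3c H4c]]].
induction k as [|k [IH1 IH2]].
- split.
  + intros x Hx. simpl in Hx. destruct Hx as [Hx|[Hx|[Hx|[Hx|Hx]]]]; subst; auto.
  + intros l Hl. simpl in Hl. destruct (LineRealize C Sg l Adm Hl) as [m1 [m2 Hm]].
    { rewrite Forall_forall in HL. auto. }
    exists m1, m2. exact Hm.
- assert (GL : forall l, (snd (stage C c1 c2 c3 c4 k) l \/ exists b1 b2, fst (stage C c1 c2 c3 c4 k) b1 /\ fst (stage C c1 c2 c3 c4 k) b2 /\ b1 <> b2 /\ l = line_through b1 b2) -> GoodL Sg l).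
  { intros l [Hl | [b1 [b2 [Hb1 [Hb2 [Hne El]]]]]]; auto. subst. apply GoodL_new; auto. }
  split.
  + intros x Hx. apply stage_S_fst in Hx.
    destruct Hx as [Hx | [[l1 [l2 [Hl1 [Hl2 [NP [O1 O2]]]]]] | [l [g [Hl [Hg Hiso]]]]]]; auto.
    * destruct (GL l1 Hl1) as [m1 [m2 [S1 [S2 [N12 [E12 [mu1 [Hmu1 Emu1]]]]]]]].
      destruct (GL l2 Hl2) as [m3 [m4 [S3 [S4 [N34 [E34 [mu2 [Hmu2 Emu2]]]]]]]].
      apply (H3c m1 m2 m3 m4 x); auto.
      -- exact (par_transfer m1 m2 m3 m4 l1 l2 mu1 mu2 Hmu1 Hmu2 Emu1 Emu2 NP).
      -- apply E12; auto.
      -- apply E34; auto.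
    * destruct (GL l Hl) as [m1 [m2 [S1 [S2 [N12 [E12 _]]]]]].
      apply (H4c m1 m2 x); auto. right. exists g. split; auto. eapply iso_transfer; eauto.
  + intros l Hl. apply stage_S_snd in Hl. apply GL; auto.
Qed.

Theorem main_proof (C : config) (a : pt) :
  Forall is_line (clines C) ->
  (non_constructible C a /\
     ~ (forall c1 c2 c3 c4 : pt, general_position c1 c2 c3 c4 ->
          algorithm_constructs C c1 c2 c3 c4 a))
  \/
  (~ non_constructible C a /\
     (forall c1 c2 c3 c4 : pt, general_position c1 c2 c3 c4 ->
          algorithm_constructs C c1 c2 c3 c4 a)).
Proof.
intro HL. destruct (classic (non_constructible C a)) as [NC|NNC].
- left. split; auto. intro Hall. destruct NC as [Sg [Adm Na]].
  destruct (GPexists Sg (proj1 Adm)) as [c1 [c2 [c3 [c4 [S1 [S2 [S3 [S4 Hgp]]]]]]]].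
  destruct (Hall c1 c2 c3 c4 Hgp) as [k Hk].
  apply Na. apply (proj1 (stage_in C Sg c1 c2 c3 c4 Adm HL S1 S2 S3 S4 k)). exact Hk.
- right. split; auto. intros c1 c2 c3 c4 Hgp.
  apply NNPP. intro Hn. apply NNC.
  exists (fun x => exists k, fst (stage C c1 c2 c3 c4 k) x). split.
  + apply DirA; auto.
  + exact Hn.
Qed.

Set Bullet Behavior "Strict Subproofs".
Theorem mainTheorem12 (C : config) (a : pt) :
  Forall is_line (clines C) ->
  (non_constructible C a /\
     ~ (forall c1 c2 c3 c4 : pt, general_position c1 c2 c3 c4 ->
          algorithm_constructs C c1 c2 c3 c4 a))
  \/
  (~ non_constructible C a /\
     (forall c1 c2 c3 c4 : pt, general_position c1 c2 c3 c4 ->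
          algorithm_constructs C c1 c2 c3 c4 a)).
Proof. exact (main_proof C a). Qed.
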